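(* Let $X$ be a Polish space with a fixed compatible metric $d$, $h:X\to\mathbb R$, $M\ge0$, $\kappa$ a countable ordinal, $P$ a closed subset of $X$, and $x\in h_M^\kappa(P)$. Then for every $\varepsilon>0$ there is a compact set $F\subseteq B(x,\varepsilon)$, homeomorphic to the ordinal interval $[1,\omega^\kappa]$ with the order topology, such that $|h(u)|>M$ for all $u\in F\setminus\{x\}$ and $h_M^\kappa(F)=\{x\}=F^{(\kappa)}$.
   Context: $B(x,\varepsilon)$ is the open $d$-ball. $A'$ denotes the set of accumulation points of $A$ in $X$, and $A^{(\kappa)}$ its $\kappa$-th iterate (intersections at limits). For closed $P$, $h_M(P)=(P\cap\{|h|>M\})'$, with iterates $h_M^0(P)=P$, $h_M^{\alpha+1}(P)=h_M(h_M^\alpha(P))$, and $h_M^\alpha(P)=\bigcap_{\alpha'<\alpha}h_M^{\alpha'}(P)$ for limit $\alpha$. *)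

(* Defs.v *)
From Stdlib Require Import Reals List.
Open Scope R_scope.

Section Defs.
Context {X : Type} (d : X -> X -> R).

Definition is_metric : Prop :=
  (forall x y, 0 <= d x y) /\ (forall x y, d x y = 0 <-> x = y) /\
  (forall x y, d x y = d y x) /\ (forall x y z, d x z <= d x y + d y z).

Definition open_in (U : X -> Prop) : Prop :=
  forall x, U x -> exists e, 0 < e /\ forall y, d x y < e -> U y.

Definition cauchy (u : nat -> X) : Prop :=
  forall e, 0 < e -> exists N, forall m n, (N <= m)%nat -> (N <= n)%nat -> d (u m) (u n) < e.

Definition converges_to (u : nat -> X) (l : X) : Prop :=
  forall e, 0 < e -> exists N, forall n, (N <= n)%nat -> d (u n) l < e.

Definition complete : Prop :=
  forall u, cauchy u -> exists l, converges_to u l.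

(** countable dense subset (enumerated, possibly with gaps, so X may be empty) *)
Definition separable : Prop :=
  exists s : nat -> option X, forall x e, 0 < e ->
    exists n y, s n = Some y /\ d x y < e.

Definition compact_in (F : X -> Prop) : Prop :=
  forall (I : Type) (U : I -> X -> Prop),
    (forall i, open_in (U i)) -> (forall x, F x -> exists i, U i x) ->
    exists l : list I, forall x, F x -> exists i, In i l /\ U i x.

Definition ball (x : X) (e : R) : X -> Prop := fun y => d x y < e.

Definition acc (A : X -> Prop) : X -> Prop :=
  fun x => forall e, 0 < e -> exists y, A y /\ y <> x /\ d x y < e.

Definition hM (h : X -> R) (M : R) (P : X -> Prop) : X -> Prop :=
  acc (fun y => P y /\ M < Rabs (h y)).
End Defs.

Definition polish_with_metric {X : Type} (d : X -> X -> R) : Prop :=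
  is_metric d /\ separable d /\
  exists d' : X -> X -> R, is_metric d' /\ complete d' /\
    forall U, open_in d U <-> open_in d' U.

(** ---- Ordinals ----
   A countable ordinal kappa is given as the order type of a strict
   well-order (K, lt) on a countable type K.  Ordinals <= kappa are indexed by
   [option K]: [Some k] is the ordinal (order type of {j | lt j k}) and [None]
   is kappa itself. *)
Definition well_order {K : Type} (lt : K -> K -> Prop) : Prop :=
  well_founded lt /\ (forall a b c, lt a b -> lt b c -> lt a c) /\
  (forall a b, lt a b \/ a = b \/ lt b a).

Definition countable_type (K : Type) : Prop :=
  exists f : K -> nat, forall a b, f a = f b -> a = b.

Definition ltx {K : Type} (lt : K -> K -> Prop) (a b : option K) : Prop :=
  match a, b with
  | Some a, Some b => lt a b
  | Some _, None => True
  | None, _ => False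
  end.

Definition is_zero_ord {K} (lt : K -> K -> Prop) (a : option K) : Prop :=
  forall b, ~ ltx lt b a.
Definition succ_of {K} (lt : K -> K -> Prop) (b a : option K) : Prop :=
  ltx lt b a /\ forall c, ltx lt c a -> c = b \/ ltx lt c b.
Definition is_limit_ord {K} (lt : K -> K -> Prop) (a : option K) : Prop :=
  ~ is_zero_ord lt a /\ ~ (exists b, succ_of lt b a).

Definition is_iteration {X K : Type} (lt : K -> K -> Prop)
  (Phi : (X -> Prop) -> (X -> Prop)) (A : X -> Prop)
  (D : option K -> X -> Prop) : Prop :=
  forall a x, D a x <->
    ((is_zero_ord lt a /\ A x) \/
     (exists b, succ_of lt b a /\ Phi (D b) x) \/
     (is_limit_ord lt a /\ forall b, ltx lt b a -> D b x)).

Definition iterate {X K : Type} (lt : K -> K -> Prop)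
  (Phi : (X -> Prop) -> (X -> Prop)) (A : X -> Prop) (a : option K) : X -> Prop :=
  fun x => forall D, is_iteration lt Phi A D -> D a x.

(** ---- The ordinal interval [1, omega^kappa] ----
   omega^kappa is realised (Cantor normal form / ordinal exponentiation) as the
   finitely supported functions K -> nat ordered antilexicographically
   (compare at the lt-greatest index where they differ).  The interval
   [1, omega^kappa] consists of the nonzero such functions together with
   the top point omega^kappa itself ([None]). *)
Definition fin_supp {K} (f : K -> nat) : Prop :=
  exists l : list K, forall k, f k <> 0%nat -> In k l.

Definition cnf_lt {K} (lt : K -> K -> Prop) (f g : K -> nat) : Prop :=
  exists k, (f k < g k)%nat /\ forall j, lt k j -> f j = g j.

Definition CNFpos {K : Type} : Type :=
  { f : K -> nat | fin_supp f /\ exists k, f k <> 0%nat }.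

Definition omega_pow_interval (K : Type) : Type := option (@CNFpos K).

Definition opi_lt {K} (lt : K -> K -> Prop) (p q : omega_pow_interval K) : Prop :=
  match p, q with
  | Some f, Some g => cnf_lt lt (proj1_sig f) (proj1_sig g)
  | Some _, None => True
  | None, _ => False
  end.

Definition order_open {T : Type} (lt : T -> T -> Prop) (U : T -> Prop) : Prop :=
  forall y, U y -> exists lo hi : option T,
    (forall a, lo = Some a -> lt a y) /\ (forall b, hi = Some b -> lt y b) /\
    forall z, (forall a, lo = Some a -> lt a z) ->
              (forall b, hi = Some b -> lt z b) -> U z.

Definition sub_open {X : Type} (d : X -> X -> R) (F : X -> Prop)
  (V : {u : X | F u} -> Prop) : Prop :=
  forall u, V u -> exists e, 0 < e /\
    forall v, d (proj1_sig u) (proj1_sig v) < e -> V v.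

Definition homeomorphic_to_omega_pow {X K : Type} (d : X -> X -> R)
  (lt : K -> K -> Prop) (F : X -> Prop) : Prop :=
  exists (phi : {u : X | F u} -> omega_pow_interval K)
         (psi : omega_pow_interval K -> {u : X | F u}),
    (forall u, psi (phi u) = u) /\ (forall p, phi (psi p) = p) /\
    (forall U, order_open (opi_lt lt) U -> sub_open d F (fun u => U (phi u))) /\
    (forall V, sub_open d F V -> order_open (opi_lt lt) (fun p => V (psi p))).

(* Main.v *)
Require Import Defs.
From Stdlib Require Import Reals List Lra Lia Classical ClassicalEpsilon FunctionalExtensionality PropExtensionality ProofIrrelevance.
Open Scope R_scope.

Section Ord.
Context {K : Type} (lt : K -> K -> Prop) (Hwo : well_order lt).

Definition ole (a b : option K) := ltx lt a b \/ a = b.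

Lemma lt_wf : well_founded lt. Proof. exact (proj1 Hwo). Qed.
Lemma lt_trans : forall a b c, lt a b -> lt b c -> lt a c.
Proof. exact (proj1 (proj2 Hwo)). Qed.
Lemma lt_trich : forall a b, lt a b \/ a = b \/ lt b a.
Proof. exact (proj2 (proj2 Hwo)). Qed.
Lemma lt_irrefl : forall a, ~ lt a a.
Proof. intros a H. induction (lt_wf a) as [a _ IH]. exact (IH a H H). Qed.

Lemma ltx_wf : well_founded (ltx lt).
Proof.
  assert (HS : forall k, Acc (ltx lt) (Some k)).
  { intro k. induction (lt_wf k) as [k _ IH]. constructor. intros [j|] Hj; simpl in Hj.
    - apply IH; exact Hj.
    - destruct Hj. }
  intros [k|]. apply HS. constructor. intros [j|] Hj. apply HS. destruct Hj.
Qed.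

Lemma ltx_trans : forall a b c, ltx lt a b -> ltx lt b c -> ltx lt a c.
Proof.
  intros [a|] [b|] [c|]; simpl; auto; try tauto. apply lt_trans.
Qed.

Lemma ltx_irrefl : forall a, ~ ltx lt a a.
Proof. intros [a|]; simpl. apply lt_irrefl. auto. Qed.

Lemma ltx_trich : forall a b, ltx lt a b \/ a = b \/ ltx lt b a.
Proof.
  intros [a|] [b|]; simpl; auto.
  destruct (lt_trich a b) as [H|[H|H]]; subst; auto.
Qed.

Lemma ltx_asym : forall a b, ltx lt a b -> ~ ltx lt b a.
Proof. intros a b H1 H2. apply (ltx_irrefl a). eapply ltx_trans; eauto. Qed.

Lemma ole_ltx_trans : forall a b c, ole a b -> ltx lt b c -> ltx lt a c.
Proof. intros a b c [H|H] H'; subst; auto. eapply ltx_trans; eauto. Qed.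
Lemma ltx_ole_trans : forall a b c, ltx lt a b -> ole b c -> ltx lt a c.
Proof. intros a b c H [H'|H']; subst; auto. eapply ltx_trans; eauto. Qed.
Lemma ole_trans : forall a b c, ole a b -> ole b c -> ole a c.
Proof. intros a b c [H|H] H'; subst; auto. left. eapply ltx_ole_trans; eauto. Qed.
Lemma not_ltx_ole : forall a b, ~ ltx lt b a -> ole a b.
Proof. intros a b H. destruct (ltx_trich a b) as [H1|[H1|H1]]; unfold ole; tauto. Qed.
Lemma ole_not_ltx : forall a b, ole a b -> ~ ltx lt b a.
Proof. intros a b [H|H] H'; subst. eapply ltx_asym; eauto. eapply ltx_irrefl; eauto. Qed.

Lemma min_exists : forall Q : option K -> Prop, (exists a, Q a) ->
  exists m, Q m /\ forall b, Q b -> ole m b.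
Proof.
  intros Q [a Ha]. induction (ltx_wf a) as [a _ IH].
  destruct (classic (exists b, Q b /\ ltx lt b a)) as [[b [Hb Hba]]|Hn].
  - exact (IH b Hba Hb).
  - exists a. split; auto. intros b Hb. apply not_ltx_ole. intro H. apply Hn; eauto.
Qed.

Lemma zero_ole : forall a b, is_zero_ord lt a -> ole a b.
Proof. intros a b H. apply not_ltx_ole. apply H. Qed.

Lemma zero_unique : forall a b, is_zero_ord lt a -> is_zero_ord lt b -> a = b.
Proof.
  intros a b Ha Hb. destruct (ltx_trich a b) as [H|[H|H]]; auto.
  exfalso; apply (Hb a H). exfalso; apply (Ha b H).
Qed.

Lemma limit_between : forall a b, is_limit_ord lt a -> ltx lt b a ->
  exists c, ltx lt b c /\ ltx lt c a.
Proof.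
  intros a b [Hz Hs] Hba. apply NNPP. intro Hn. apply Hs. exists b. split; auto.
  intros c Hc. destruct (ltx_trich c b) as [H|[H|H]]; auto. exfalso; eauto.
Qed.

Lemma succ_exists : forall a b, ltx lt b a -> exists c, succ_of lt b c /\ ole c a.
Proof.
  intros a b Hba. destruct (min_exists (fun c => ltx lt b c)) as [c [Hc Hmin]]; eauto.
  exists c. split; [split; auto|].
  - intros c' Hc'. destruct (ltx_trich c' b) as [H|[H|H]]; auto.
    exfalso. specialize (Hmin c' H). eapply ole_not_ltx; eauto.
  - apply Hmin; auto.
Qed.

Lemma succ_le : forall b c a, succ_of lt b c -> ltx lt b a -> ole c a.
Proof.
  intros b c a [Hbc Hm] Hba. apply not_ltx_ole. intro H.
  destruct (Hm a H) as [E|E]. subst. eapply ltx_irrefl; eauto.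
  eapply ltx_asym; eauto.
Qed.

Lemma succ_pred_unique : forall b b' a, succ_of lt b a -> succ_of lt b' a -> b = b'.
Proof.
  intros b b' a [H1 H2] [H3 H4]. destruct (H2 b' H3) as [E|E]; auto.
  destruct (H4 b H1) as [E'|E']; auto. exfalso; eapply ltx_asym; eauto.
Qed.

Lemma succ_not_zero : forall b a, succ_of lt b a -> ~ is_zero_ord lt a.
Proof. intros b a [H _] Hz. exact (Hz b H). Qed.

Lemma ord_cases : forall a, is_zero_ord lt a \/ (exists b, succ_of lt b a) \/ is_limit_ord lt a.
Proof.
  intro a. destruct (classic (is_zero_ord lt a)); auto.
  destruct (classic (exists b, succ_of lt b a)); auto. right; right; split; auto.
Qed.

Section Iter.
Context {X : Type} (Phi : (X -> Prop) -> (X -> Prop)) (A : X -> Prop).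

Definition iter_F (a : option K) (rec : forall b, ltx lt b a -> X -> Prop) : X -> Prop :=
  fun x => (is_zero_ord lt a /\ A x) \/
           (exists b (H : ltx lt b a), succ_of lt b a /\ Phi (rec b H) x) \/
           (is_limit_ord lt a /\ forall b (H : ltx lt b a), rec b H x).

Definition Dc : option K -> X -> Prop := Fix ltx_wf (fun _ => X -> Prop) iter_F.

Lemma Dc_eq : forall a, Dc a = iter_F a (fun b _ => Dc b).
Proof.
  intro a. unfold Dc. rewrite Fix_eq. reflexivity.
  intros a' f g Hfg. assert (E : f = g).
  { apply functional_extensionality_dep; intro b. apply functional_extensionality_dep; intro H.
    apply Hfg. }
  subst; reflexivity.
Qed.

Lemma Dc_is : is_iteration lt Phi A Dc.
Proof.
  intros a x. rewrite Dc_eq. unfold iter_F. split.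
  - intros [H|[[b [Hb H]]|H]]; [left; auto|right; left; exists b; auto|right; right; auto].
  - intros [H|[[b H]|H]]; [left; auto| |right; right; auto]. right; left. exists b, (proj1 (proj1 H)). auto.
Qed.

Lemma iter_unique : forall D1 D2, is_iteration lt Phi A D1 -> is_iteration lt Phi A D2 ->
  forall a x, D1 a x <-> D2 a x.
Proof.
  intros D1 D2 H1 H2 a. induction (ltx_wf a) as [a _ IH].
  assert (E : forall b, ltx lt b a -> D1 b = D2 b).
  { intros b Hb. apply functional_extensionality; intro y. apply propositional_extensionality.
    apply IH; auto. }
  intro x. rewrite (H1 a x), (H2 a x). split.
  - intros [H|[[b [Hs H]]|[Hl H]]]; auto.
    + right; left. exists b. split; auto. rewrite <- (E b (proj1 Hs)); auto.
    + right; right. split; auto. intros b Hb. apply IH; auto.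
  - intros [H|[[b [Hs H]]|[Hl H]]]; auto.
    + right; left. exists b. split; auto. rewrite (E b (proj1 Hs)); auto.
    + right; right. split; auto. intros b Hb. apply IH; auto.
Qed.

Lemma iterate_Dc : forall a x, iterate lt Phi A a x <-> Dc a x.
Proof.
  intros a x. split.
  - intro H. apply H. apply Dc_is.
  - intros H D HD. apply (iter_unique Dc D Dc_is HD). auto.
Qed.

Lemma iterate_eq_Dc : iterate lt Phi A = Dc.
Proof.
  apply functional_extensionality; intro a. apply functional_extensionality; intro x.
  apply propositional_extensionality. apply iterate_Dc.
Qed.

Lemma iterate_is : is_iteration lt Phi A (iterate lt Phi A).
Proof. rewrite iterate_eq_Dc. apply Dc_is. Qed.

Lemma iter_zero : forall a x, is_zero_ord lt a -> (iterate lt Phi A a x <-> A x).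
Proof.
  intros a x Hz. rewrite (iterate_is a x). split.
  - intros [H|[[b [Hs _]]|[Hl _]]]. tauto. exfalso; eapply succ_not_zero; eauto. exfalso; apply (proj1 Hl); auto.
  - auto.
Qed.

Lemma iter_succ : forall b a x, succ_of lt b a ->
  (iterate lt Phi A a x <-> Phi (iterate lt Phi A b) x).
Proof.
  intros b a x Hs. rewrite (iterate_is a x). split.
  - intros [H|[[b' [Hs' H]]|[Hl _]]].
    + exfalso; eapply succ_not_zero; eauto. apply H.
    + rewrite (succ_pred_unique b b' a Hs Hs'). auto.
    + exfalso. apply (proj2 Hl). eauto.
  - intro H. right; left. eauto.
Qed.

Lemma iter_limit : forall a x, is_limit_ord lt a ->
  (iterate lt Phi A a x <-> forall b, ltx lt b a -> iterate lt Phi A b x).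
Proof.
  intros a x Hl. rewrite (iterate_is a x). split.
  - intros [H|[[b' [Hs' H]]|[_ H]]]; auto.
    + exfalso; apply (proj1 Hl); apply H.
    + exfalso. apply (proj2 Hl). eauto.
  - intro H. right; right. auto.
Qed.
End Iter.

Lemma iterate_ext : forall {X} (Phi1 Phi2 : (X -> Prop) -> X -> Prop) A,
  (forall S y, Phi1 S y <-> Phi2 S y) -> forall a y,
  (iterate lt Phi1 A a y <-> iterate lt Phi2 A a y).
Proof.
  intros X Phi1 Phi2 A HP.
  assert (T : forall P1 P2 : (X -> Prop) -> X -> Prop, (forall S y, P1 S y <-> P2 S y) ->
    forall D, is_iteration lt P1 A D -> is_iteration lt P2 A D).
  { intros P1 P2 HP12 D HD b z. rewrite (HD b z). split.
    - intros [Q|[[c Q]|Q]]; [left; auto| right; left; exists c; split; [apply Q|apply HP12; apply Q]| right; right; auto].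
    - intros [Q|[[c Q]|Q]]; [left; auto| right; left; exists c; split; [apply Q|apply HP12; apply Q]| right; right; auto]. }
  intros a y. split; intros H D HD; apply H.
  - apply (T Phi2 Phi1); auto. intros; symmetry; auto.
  - apply (T Phi1 Phi2); auto.
Qed.

End Ord.

Open Scope nat_scope.

Section CNF.
Context {K : Type} (lt : K -> K -> Prop) (Hwo : well_order lt).

Notation Tt := (omega_pow_interval K).
Let ltT := lt_trich lt Hwo.
Let ltI := lt_irrefl lt Hwo.
Let ltTr := lt_trans lt Hwo.
Definition olt : Tt -> Tt -> Prop := opi_lt lt.
Definition oleT (p q : Tt) := olt p q \/ p = q.

Lemma kmax (Q : K -> Prop) (l : list K) : (exists k, Q k /\ In k l) ->
  exists m, Q m /\ In m l /\ forall j, Q j -> In j l -> j = m \/ lt j m.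
Proof.
  induction l as [|a l IH]; intros [k [Hk Hin]]. destruct Hin.
  destruct (classic (exists k, Q k /\ In k l)) as [Hex|Hn].
  - destruct (IH Hex) as [m [Hm [Hml Hmax]]].
    destruct (classic (Q a /\ lt m a)) as [[Qa Hma]|Hna].
    + exists a. split; auto. split; [left; auto|]. intros j Hj [E|Ej]; auto.
      destruct (Hmax j Hj Ej) as [E|E]; subst; auto. right; eapply ltTr; eauto.
    + exists m. split; auto. split; [right; auto|]. intros j Hj [E|Ej]; auto.
      subst j. destruct (ltT a m) as [H|[H|H]]; auto. tauto.
  - exists a. destruct Hin as [E|E]. subst; split; auto. split; [left; auto|].
    intros j Hj [E|Ej]; auto. exfalso; eauto.
    exfalso; eauto.
Qed.

Lemma cnf_irrefl : forall f, ~ cnf_lt lt f f.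
Proof. intros f [k [H _]]. lia. Qed.

Lemma cnf_trans : forall f g h, cnf_lt lt f g -> cnf_lt lt g h -> cnf_lt lt f h.
Proof.
  intros f g h [k1 [H1 E1]] [k2 [H2 E2]].
  destruct (ltT k1 k2) as [H|[H|H]].
  - exists k2. rewrite E1; auto. split; auto. intros j Hj. rewrite E1, E2; auto.
    eapply ltTr; eauto.
  - subst. exists k2. split. lia. intros j Hj. rewrite E1, E2; auto.
  - exists k1. rewrite <- E2; auto. split; auto. intros j Hj. rewrite E1, E2; auto.
    eapply ltTr; eauto.
Qed.

Lemma cnf_trich : forall f g, fin_supp f -> fin_supp g ->
  (forall k, f k = g k) \/ cnf_lt lt f g \/ cnf_lt lt g f.
Proof.
  intros f g [lf Hf] [lg Hg].
  destruct (classic (forall k, f k = g k)) as [E|Hn]; auto. right.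
  apply not_all_ex_not in Hn. destruct Hn as [k Hk].
  destruct (kmax (fun k => f k <> g k) (lf ++ lg)) as [m [Hm [_ Hmax]]].
  { exists k. split; auto. apply in_or_app. destruct (Nat.eq_dec (f k) 0).
    right; apply Hg; lia. left; apply Hf; lia. }
  assert (Ab : forall j, lt m j -> f j = g j).
  { intros j Hj. apply NNPP. intro Hne. destruct (Hmax j Hne) as [E|E].
    - apply in_or_app. destruct (Nat.eq_dec (f j) 0). right; apply Hg; lia. left; apply Hf; lia.
    - subst; eapply ltI; eauto.
    - eapply ltI. eapply ltTr; eauto. }
  destruct (Nat.lt_gt_cases (f m) (g m)) as [[H|H] _]; auto.
  - left. exists m. auto.
  - right. exists m. split; auto. intros j Hj; symmetry; auto.
Qed.

Lemma cnf_ext : forall f f' g g', (forall k, f k = f' k) -> (forall k, g k = g' k) ->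
  cnf_lt lt f g -> cnf_lt lt f' g'.
Proof.
  intros f f' g g' Ef Eg [k [H1 H2]]. exists k. rewrite <- Ef, <- Eg. split; auto.
  intros j Hj. rewrite <- Ef, <- Eg; auto.
Qed.

Definition addf (f c : K -> nat) : K -> nat := fun i => f i + c i.

Lemma fs_add : forall f c, fin_supp f -> fin_supp c -> fin_supp (addf f c).
Proof.
  intros f c [l1 H1] [l2 H2]. exists (l1 ++ l2). intros k Hk. unfold addf in Hk.
  apply in_or_app. destruct (Nat.eq_dec (f k) 0). right; apply H2; lia. left; apply H1; lia.
Qed.

Lemma cnf_add_iff : forall f g c, cnf_lt lt f g <-> cnf_lt lt (addf f c) (addf g c).
Proof.
  intros f g c; unfold addf; split; intros [k [H1 H2]]; exists k; split; try lia;
  intros j Hj; specialize (H2 j Hj); lia.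
Qed.

Lemma cnf_add_pos : forall f c, fin_supp f -> fin_supp c -> (exists k, c k <> 0) ->
  cnf_lt lt f (addf f c).
Proof.
  intros f c Hf Hc [k Hk]. destruct (cnf_trich f (addf f c) Hf (fs_add f c Hf Hc)) as [E|[H|H]]; auto.
  - specialize (E k); unfold addf in E; lia.
  - destruct H as [j [Hj _]]. unfold addf in Hj. lia.
Qed.

Lemma cnfpos_eq : forall f g : @CNFpos K, (forall k, proj1_sig f k = proj1_sig g k) -> f = g.
Proof.
  intros [f Hf] [g Hg] E; simpl in E.
  assert (f = g) by (apply functional_extensionality; auto). subst.
  f_equal. apply proof_irrelevance.
Qed.

Lemma Some_eq : forall f g : @CNFpos K, (forall k, proj1_sig f k = proj1_sig g k) -> Some f = Some g.
Proof. intros; f_equal; apply cnfpos_eq; auto. Qed.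

Lemma fs_of (f : @CNFpos K) : fin_supp (proj1_sig f).
Proof. exact (proj1 (proj2_sig f)). Qed.
Lemma nz_of (f : @CNFpos K) : exists k, proj1_sig f k <> 0.
Proof. exact (proj2 (proj2_sig f)). Qed.

Lemma olt_irrefl : forall p, ~ olt p p.
Proof. intros [f|]; simpl; auto. apply cnf_irrefl. Qed.

Lemma olt_trans : forall p q r, olt p q -> olt q r -> olt p r.
Proof.
  intros [f|] [g|] [h|]; simpl; auto; try tauto. apply cnf_trans.
Qed.

Lemma olt_trich : forall p q, olt p q \/ p = q \/ olt q p.
Proof.
  intros [f|] [g|]; simpl; auto.
  destruct (cnf_trich (proj1_sig f) (proj1_sig g) (fs_of f) (fs_of g)) as [E|[H|H]]; auto.
  right; left. apply Some_eq; auto.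
Qed.

Lemma olt_asym : forall p q, olt p q -> ~ olt q p.
Proof. intros p q H1 H2. apply (olt_irrefl p). eapply olt_trans; eauto. Qed.
Lemma oleT_olt_trans : forall p q r, oleT p q -> olt q r -> olt p r.
Proof. intros p q r [H|H] H'; subst; auto. eapply olt_trans; eauto. Qed.
Lemma olt_oleT_trans : forall p q r, olt p q -> oleT q r -> olt p r.
Proof. intros p q r H [H'|H']; subst; auto. eapply olt_trans; eauto. Qed.
Lemma oleT_trans : forall p q r, oleT p q -> oleT q r -> oleT p r.
Proof. intros p q r [H|H] H'; subst; auto. left. eapply olt_oleT_trans; eauto. Qed.
Lemma not_olt_oleT : forall p q, ~ olt q p -> oleT p q.
Proof. intros p q H. destruct (olt_trich p q) as [H1|[H1|H1]]; unfold oleT; tauto. Qed.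
Lemma oleT_not_olt : forall p q, oleT p q -> ~ olt q p.
Proof. intros p q [H|H] H'; subst. eapply olt_asym; eauto. eapply olt_irrefl; eauto. Qed.

Definition e (j : K) : K -> nat := fun i => if excluded_middle_informative (i = j) then 1 else 0.
Lemma e_jj : forall j, e j j = 1.
Proof. intro j; unfold e; destruct (excluded_middle_informative (j = j)); tauto. Qed.
Lemma e_ji : forall j i, i <> j -> e j i = 0.
Proof. intros j i H; unfold e; destruct (excluded_middle_informative (i = j)); tauto. Qed.
Lemma e_le1 : forall j i, e j i <= 1.
Proof. intros j i; unfold e; destruct (excluded_middle_informative (i = j)); lia. Qed.
Lemma fs_e : forall j, fin_supp (e j).
Proof.
  intro j. exists (j :: nil). intros k Hk. left. destruct (excluded_middle_informative (k = j)); auto.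
  rewrite e_ji in Hk; auto. lia.
Qed.
Lemma fs_scale : forall n (f : K -> nat), fin_supp f -> fin_supp (fun i => n * f i).
Proof. intros n f [l H]. exists l. intros k Hk. apply H. intro E; rewrite E in Hk; lia. Qed.

Definition ec (j : K) : @CNFpos K.
Proof. exists (e j). split. apply fs_e. exists j. rewrite e_jj; lia. Defined.

Definition shift (c : K -> nat) (Hc : fin_supp c) (g : @CNFpos K) : @CNFpos K.
Proof.
  exists (addf (proj1_sig g) c). split. apply fs_add; auto. apply fs_of.
  destruct (nz_of g) as [k Hk]. exists k. unfold addf. lia.
Defined.

Definition top (a : option K) : Tt := match a with None => None | Some j => Some (ec j) end.

Definition Bel (j : K) (f : K -> nat) := forall i, f i <> 0 -> lt i j.

Definition Dm (a : option K) (p : Tt) : Prop :=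
  match a with
  | None => True
  | Some j => exists g, p = Some g /\ ((forall i, proj1_sig g i = e j i) \/ Bel j (proj1_sig g))
  end.

Lemma Bel_lt : forall j f, Bel j f -> cnf_lt lt f (e j).
Proof.
  intros j f H. exists j. split.
  - rewrite e_jj. destruct (Nat.eq_dec (f j) 0). lia. exfalso; apply (ltI j); auto.
  - intros i Hi. rewrite e_ji. destruct (Nat.eq_dec (f i) 0); auto. exfalso.
    apply (ltI i). eapply ltTr; eauto. intro E; subst; eapply ltI; eauto.
Qed.

Lemma D_top : forall a, Dm a (top a).
Proof. intros [j|]; simpl; auto. exists (ec j). split; auto. Qed.

Lemma D_le : forall a p, Dm a p -> oleT p (top a).
Proof.
  intros [j|] p H; simpl in *.
  - destruct H as [g [E [H|H]]]; subst.
    + right. apply Some_eq. auto.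
    + left. simpl. apply Bel_lt; auto.
  - destruct p; [left; simpl; auto | right; auto].
Qed.

Lemma lt_e_Bel : forall j f, cnf_lt lt f (e j) -> Bel j f.
Proof.
  intros j f [k [H1 H2]] i Hi.
  assert (k = j). { apply NNPP; intro; rewrite e_ji in H1; auto; lia. } subst k.
  destruct (ltT i j) as [H|[H|H]]; auto.
  - subst. rewrite e_jj in H1. lia.
  - rewrite H2, e_ji in Hi; auto. lia. intro E; subst; eapply ltI; eauto.
Qed.

Lemma lt_top_D : forall a p, olt p (top a) -> Dm a p /\ p <> top a.
Proof.
  intros a p H. split.
  - destruct a as [j|]; simpl; auto. destruct p as [f|]; simpl in H; [|destruct H].
    exists f. split; auto. right. apply lt_e_Bel; auto.
  - intro E; subst; eapply olt_irrefl; eauto.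
Qed.

Lemma zero_D : forall a p, is_zero_ord lt a -> Dm a p -> p = top a.
Proof.
  intros a p Hz H. destruct a as [j|]; simpl in *.
  - destruct H as [g [E [H|H]]]; subst.
    + apply Some_eq; auto.
    + exfalso. destruct (nz_of g) as [k Hk]. apply (Hz (Some k)). simpl. apply H; auto.
  - destruct p as [g|]; auto. exfalso. destruct (nz_of g) as [k Hk]. apply (Hz (Some k)). simpl; auto.
Qed.

Lemma top_mono : forall a b, ltx lt a b -> olt (top a) (top b).
Proof.
  intros [i|] [j|] H; simpl in *; auto. apply Bel_lt. intros k Hk.
  destruct (excluded_middle_informative (k = i)). subst; auto. rewrite e_ji in Hk; auto. lia.
Qed.

Lemma top_mono_le : forall a b, ole lt a b -> oleT (top a) (top b).
Proof. intros a b [H|H]. left; apply top_mono; auto. right; subst; auto. Qed.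

Lemma top_inj_lt : forall a b, olt (top a) (top b) -> ltx lt a b.
Proof.
  intros a b H. destruct (ltx_trich lt Hwo a b) as [H1|[H1|H1]]; auto.
  subst; exfalso; eapply olt_irrefl; eauto.
  exfalso; eapply olt_asym; eauto. apply top_mono; auto.
Qed.

Record Blocks (a : option K) (gam : nat -> option K) (io : nat -> Tt -> Tt) : Prop := {
  B_gam : forall n, ltx lt (gam n) a;
  B_cof : forall b, ltx lt b a -> exists N, forall n, N <= n -> ole lt b (gam n);
  B_mono : forall n p q, Dm (gam n) p -> Dm (gam n) q -> olt p q -> olt (io n p) (io n q);
  B_rng : forall n p, Dm (gam n) p -> olt (io n p) (top a);
  B_ord : forall m n p q, m < n -> Dm (gam m) p -> Dm (gam n) q -> olt (io m p) (io n q);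
  B_onto : forall r, olt r (top a) -> exists n p, Dm (gam n) p /\ io n p = r
}.

End CNF.

Section Blk.
Context {K : Type} (lt : K -> K -> Prop) (Hwo : well_order lt).
Notation Tt := (omega_pow_interval K).
Let ltT := lt_trich lt Hwo.
Let ltI := lt_irrefl lt Hwo.
Let ltTr := lt_trans lt Hwo.
Notation olt := (olt lt).
Notation top := (top (K:=K)).
Notation Dm := (Dm lt).

Lemma D_some : forall j p, Dm (Some j) p -> exists g, p = Some g /\
   ((forall i, proj1_sig g i = e j i) \/ Bel lt j (proj1_sig g)).
Proof. intros j p H; exact H. Qed.

Definition LEj (j : K) (f : K -> nat) := forall i, f i <> 0 -> i = j \/ lt i j.

Lemma LE_top : forall j a (f : @CNFpos K), succ_of lt (Some j) a -> LEj j (proj1_sig f) -> olt (Some f) (top a).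
Proof.
  intros j [k|] f Hs HL; simpl; auto. apply Bel_lt; auto. intros i Hi.
  destruct Hs as [Hjk _]. simpl in Hjk. destruct (HL i Hi) as [E|E]. subst; auto. eapply ltTr; eauto.
Qed.

Lemma top_LE : forall j a (f : @CNFpos K), succ_of lt (Some j) a -> olt (Some f) (top a) -> LEj j (proj1_sig f).
Proof.
  intros j [k|] f [Hjk Hm] H i Hi; simpl in *.
  - apply lt_e_Bel in H; auto. specialize (Hm (Some i) (H i Hi)). simpl in Hm.
    destruct Hm as [E|E]. inversion E; auto. auto.
  - specialize (Hm (Some i) I). simpl in Hm. destruct Hm as [E|E]. inversion E; auto. auto.
Qed.

Lemma D_LE : forall j (g : @CNFpos K), (forall i, proj1_sig g i = e j i) \/ Bel lt j (proj1_sig g) -> LEj j (proj1_sig g).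
Proof.
  intros j g [H|H] i Hi.
  - rewrite H in Hi. left. apply NNPP; intro; rewrite e_ji in Hi; auto.
  - right; auto.
Qed.

Lemma D_above : forall j (g : @CNFpos K), (forall i, proj1_sig g i = e j i) \/ Bel lt j (proj1_sig g) ->
  forall i, lt j i -> proj1_sig g i = 0.
Proof.
  intros j g H i Hi. destruct (Nat.eq_dec (proj1_sig g i) 0); auto.
  destruct (D_LE j g H i n) as [E|E]. subst; exfalso; eapply ltI; eauto.
  exfalso; eapply ltI; eapply ltTr; eauto.
Qed.

Lemma D_jval : forall j (g : @CNFpos K), (forall i, proj1_sig g i = e j i) \/ Bel lt j (proj1_sig g) ->
  (proj1_sig g j = 1 /\ forall i, proj1_sig g i = e j i) \/ (proj1_sig g j = 0 /\ Bel lt j (proj1_sig g)).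
Proof.
  intros j g [H|H].
  - left. rewrite H, e_jj. auto.
  - right. split; auto. destruct (Nat.eq_dec (proj1_sig g j) 0); auto. exfalso; apply (ltI j); auto.
Qed.

Lemma blocks_succ : forall j a, succ_of lt (Some j) a -> exists gam io, Blocks lt a gam io.
Proof.
  intros j a Hs.
  set (c := fun n i => n * e j i).
  assert (Hc : forall n, fin_supp (c n)) by (intro n; apply fs_scale; apply fs_e).
  set (io := fun n (p : Tt) => match p with Some g => Some (shift (c n) (Hc n) g) | None => None end).
  exists (fun _ => Some j), io. constructor.
  - intro n. apply Hs.
  - intros b Hb. exists 0. intros n _. destruct Hs as [_ Hm]. destruct (Hm b Hb) as [E|E].
    right; auto. left; auto.
  - intros n p q Hp Hq Hpq. destruct (D_some _ _ Hp) as [g [-> _]]. destruct (D_some _ _ Hq) as [g' [-> _]].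
    simpl in *. apply cnf_add_iff; auto.
  - intros n p Hp. destruct (D_some _ _ Hp) as [g [-> Hg]].
    apply (LE_top j a (shift (c n) (Hc n) g)); auto. intros i Hi. simpl in Hi. unfold addf, c in Hi.
    destruct (Nat.eq_dec (proj1_sig g i) 0).
    + left. apply NNPP; intro. rewrite e_ji in Hi; auto. lia.
    + apply D_LE with (g := g); auto.
  - intros m n p q Hmn Hp Hq. destruct (D_some _ _ Hp) as [g [-> Hg]]. destruct (D_some _ _ Hq) as [g' [-> Hg']].
    simpl. unfold addf, c.
    destruct (Nat.lt_ge_cases (proj1_sig g j + m * e j j) (proj1_sig g' j + n * e j j)) as [Hl|Hl].
    + exists j. split; auto. intros i Hi. rewrite (D_above j g Hg i Hi), (D_above j g' Hg' i Hi).
      rewrite e_ji. lia. intro E; subst; eapply ltI; eauto.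
    + rewrite e_jj in Hl. destruct (D_jval j g Hg) as [[G1 G2]|[G1 G2]]; [|lia].
      destruct (D_jval j g' Hg') as [[G1' G2']|[G1' G2']]; [lia|].
      assert (En : n = S m) by lia. subst n.
      apply cnf_ext with (f := fun i => proj1_sig g i + m * e j i)
         (g := addf (fun i => proj1_sig g i + m * e j i) (proj1_sig g')).
      * auto.
      * intro k. unfold addf. rewrite G2. lia.
      * apply (cnf_add_pos lt Hwo). apply fs_add; [apply fs_of|apply fs_scale; apply fs_e].
        apply fs_of. apply nz_of.
  - intros r Hr. destruct r as [f|]; [|destruct a; simpl in Hr; destruct Hr].
    assert (HL := top_LE j a f Hs Hr).
    set (g := fun i => if excluded_middle_informative (i = j) then 0 else proj1_sig f i).
    destruct (classic (exists k, g k <> 0)) as [Hnz|Hz].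
    + assert (Hg : fin_supp g /\ exists k, g k <> 0).
      { split; auto. destruct (fs_of f) as [l Hl]. exists l. intros k Hk. apply Hl.
        unfold g in Hk. destruct (excluded_middle_informative (k = j)); try lia; auto. }
      exists (proj1_sig f j), (Some (exist _ g Hg)). split.
      * simpl. exists (exist _ g Hg). split; auto. right. intros i Hi. simpl in Hi.
        unfold g in Hi. destruct (excluded_middle_informative (i = j)). lia.
        destruct (HL i Hi) as [E|E]; tauto.
      * simpl. apply Some_eq. intro k. simpl. unfold addf, c, g.
        destruct (excluded_middle_informative (k = j)). subst. rewrite e_jj. lia.
        rewrite e_ji; auto. lia.
    + assert (Hfj : proj1_sig f j <> 0).
      { destruct (nz_of f) as [k Hk]. intro E. apply Hz. exists k. unfold g.
        destruct (excluded_middle_informative (k = j)). subst; lia. auto. }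
      exists (pred (proj1_sig f j)), (Some (ec j)). split.
      * exists (ec j). split; auto.
      * simpl. apply Some_eq. intro k. simpl. unfold addf, c.
        destruct (excluded_middle_informative (k = j)). subst. rewrite e_jj. lia.
        rewrite e_ji; auto. destruct (Nat.eq_dec (proj1_sig f k) 0) as [E0|E0]; [lia|].
        exfalso. apply Hz. exists k. unfold g. destruct (excluded_middle_informative (k = j)); tauto.
Qed.

End Blk.

Section Lim.
Context {K : Type} (lt : K -> K -> Prop) (Hwo : well_order lt).
Notation Tt := (omega_pow_interval K).
Let ltT := lt_trich lt Hwo.
Let ltI := lt_irrefl lt Hwo.
Let ltTr := lt_trans lt Hwo.
Notation olt := (olt lt).
Notation oleT := (oleT lt).
Notation top := (top (K:=K)).
Notation Dm := (Dm lt).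

Definition Zm (m : K) (g : @CNFpos K) := forall i, lt m i -> proj1_sig g i = 0.

Definition liftm (m : K) (p : Tt) : Tt :=
  match p with
  | Some g => if excluded_middle_informative (Zm m g) then Some (shift (e m) (fs_e m) g) else Some g
  | None => None
  end.

Lemma lift_le : forall m k p, lt m k -> Dm (Some k) p -> oleT (liftm m p) (top (Some k)).
Proof.
  intros m k p Hmk Hp. destruct (D_some lt _ _ Hp) as [g [-> Hg]]. simpl.
  destruct (excluded_middle_informative (Zm m g)) as [Z|NZ].
  - left. simpl. apply (Bel_lt lt Hwo). intros i Hi. simpl in Hi. unfold addf in Hi.
    destruct (classic (i = m)) as [E|E]. subst; auto.
    rewrite e_ji in Hi; auto. destruct (ltT m i) as [H|[H|H]].
    + rewrite Z in Hi; auto. lia.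
    + subst; tauto.
    + eapply ltTr; eauto.
  - apply (D_le lt Hwo (Some k)). exact Hp.
Qed.

Lemma lift_gt : forall m k p, Dm (Some k) p -> olt (Some (ec m)) (liftm m p).
Proof.
  intros m k p Hp. destruct (D_some lt _ _ Hp) as [g [-> Hg]]. simpl.
  destruct (excluded_middle_informative (Zm m g)) as [Z|NZ]; simpl.
  - apply cnf_ext with (f := e m) (g := addf (e m) (proj1_sig g)); auto.
    intro k'; unfold addf; lia.
    apply (cnf_add_pos lt Hwo). apply fs_e. apply fs_of. apply nz_of.
  - destruct (cnf_trich lt Hwo (e m) (proj1_sig g) (fs_e m) (fs_of g)) as [E|[H|H]]; auto.
    + exfalso. apply NZ. intros i Hi. rewrite <- E. apply e_ji. intro; subst; eapply ltI; eauto.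
    + exfalso. apply NZ. destruct H as [k' [H1 H2]].
      assert (k' = m). { apply NNPP; intro. rewrite e_ji in H1; auto. lia. } subst k'.
      intros i Hi. rewrite H2; auto. apply e_ji. intro; subst; eapply ltI; eauto.
Qed.

Lemma lift_mono : forall m k p q, Dm (Some k) p -> Dm (Some k) q -> olt p q ->
  olt (liftm m p) (liftm m q).
Proof.
  intros m k p q Hp Hq Hpq. destruct (D_some lt _ _ Hp) as [g [-> Hg]].
  destruct (D_some lt _ _ Hq) as [g' [-> Hg']]. simpl in *.
  destruct (excluded_middle_informative (Zm m g)) as [Z|NZ];
  destruct (excluded_middle_informative (Zm m g')) as [Z'|NZ']; simpl.
  - apply cnf_add_iff; auto.
  - destruct (cnf_trich lt Hwo (addf (proj1_sig g) (e m)) (proj1_sig g')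
       (fs_add _ _ (fs_of g) (fs_e m)) (fs_of g')) as [E|[H|H]]; auto.
    + exfalso. apply NZ'. intros i Hi. rewrite <- E. unfold addf. rewrite Z, e_ji; auto.
      intro; subst; eapply ltI; eauto.
    + exfalso. apply NZ'. destruct H as [k' [H1 H2]]. intros i Hi.
      destruct (Nat.eq_dec (proj1_sig g' i) 0) as [E0|E0]; auto. exfalso.
      destruct (ltT k' i) as [Hki|[Hki|Hki]].
      * rewrite H2 in E0; auto. unfold addf in E0. rewrite Z, e_ji in E0; auto.
        intro; subst; eapply ltI; eauto.
      * subst k'. unfold addf in H1. rewrite Z, e_ji in H1; auto. lia.
        intro; subst; eapply ltI; eauto.
      * unfold addf in H1. rewrite Z, e_ji in H1. lia. intro; subst; eapply ltI; eapply ltTr; eauto.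
        eapply ltTr; eauto.
  - exfalso. apply NZ. destruct Hpq as [k' [H1 H2]]. intros i Hi.
    destruct (Nat.eq_dec (proj1_sig g i) 0) as [E0|E0]; auto. exfalso.
    destruct (ltT k' i) as [Hki|[Hki|Hki]].
    + rewrite H2 in E0; auto.
    + subst k'. rewrite Z' in H1; auto. lia.
    + rewrite Z' in H1. lia. eapply ltTr; eauto.
  - auto.
Qed.

Lemma lift_D : forall m p, Dm (Some m) p -> liftm m p = p \/ True.
Proof. auto. Qed.

Lemma nat_min : forall (Q : nat -> Prop), (exists n, Q n) -> exists n, Q n /\ forall m, m < n -> ~ Q m.
Proof.
  intros Q [n Hn]. induction n as [n IH] using (well_founded_induction Wf_nat.lt_wf).
  destruct (classic (exists m, m < n /\ Q m)) as [[m [Hm Qm]]|Hno].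
  - apply (IH m Hm Qm).
  - exists n. split; auto. intros m Hm Qm. apply Hno; eauto.
Qed.

Lemma blocks_limit : forall a, is_limit_ord lt a -> countable_type K ->
  exists gam io, Blocks lt a gam io.
Proof.
  intros a Hl [code Hcode].
  set (below := fun k => ltx lt (Some k) a).
  assert (Hnext : forall n k, exists k', below k -> below k' /\ lt k k' /\
            forall k'', code k'' = n -> below k'' -> lt k'' k' \/ k'' = k').
  { intros n k. destruct (classic (below k)) as [Hb|Hb]; [|exists k; tauto].
    assert (Hm : exists m, below m /\ (lt k m \/ k = m) /\
               forall k'', code k'' = n -> below k'' -> lt k'' m \/ k'' = m).
    { destruct (classic (exists k'', code k'' = n /\ below k'')) as [[k'' [Hc Hb'']]|Hno].
      - destruct (ltT k k'') as [H|[H|H]].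
        + exists k''. split; auto. split; auto. intros k3 Hc3 _. right. apply Hcode. congruence.
        + exists k''. split; auto. split; auto. intros k3 Hc3 _. right. apply Hcode. congruence.
        + exists k. split; auto. split; auto. intros k3 Hc3 _. left.
          assert (k3 = k'') by (apply Hcode; congruence). subst; auto.
      - exists k. split; auto. split; auto. intros k3 Hc3 Hb3. exfalso; eauto. }
    destruct Hm as [m [Hbm [Hkm Hmax]]].
    destruct (limit_between lt Hwo a (Some m) Hl Hbm) as [[k'|] [H1 H2]]; [|destruct H2].
    exists k'. intros _. split; [exact H2|]. simpl in H1. split.
    - destruct Hkm as [H|H]; subst; auto. eapply ltTr; eauto.
    - intros k3 Hc3 Hb3. left. destruct (Hmax k3 Hc3 Hb3) as [H|H]; subst; auto. eapply ltTr; eauto. }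
  assert (H0 : exists k0, below k0).
  { destruct Hl as [Hz _]. apply NNPP; intro Hn. apply Hz. intros [b|] Hb.
    apply Hn; exists b; auto. destruct a; destruct Hb. }
  destruct H0 as [k0 Hk0].
  set (nx := fun n k => proj1_sig (constructive_indefinite_description _ (Hnext n k))).
  assert (Hnx : forall n k, below k -> below (nx n k) /\ lt k (nx n k) /\
            forall k'', code k'' = n -> below k'' -> lt k'' (nx n k) \/ k'' = nx n k).
  { intros n k. unfold nx. destruct (constructive_indefinite_description _ (Hnext n k)); simpl; auto. }
  set (beta := fun n => nat_rect (fun _ => K) k0 (fun n b => nx n b) n).
  assert (Hb : forall n, below (beta n)).
  { induction n; simpl; auto. apply Hnx; auto. }
  assert (Hinc : forall n, lt (beta n) (beta (S n))).
  { intro n. apply (Hnx n (beta n) (Hb n)). }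
  assert (Hmon : forall N n, N <= n -> lt (beta N) (beta n) \/ beta N = beta n).
  { intros N n Hn. induction Hn; auto. destruct IHHn as [H|H]; left.
    eapply ltTr; eauto. rewrite H; auto. }
  assert (Hcof : forall k, below k -> exists N, forall n, N <= n -> lt k (beta n) \/ k = beta n).
  { intros k Hk. exists (S (code k)). intros n Hn.
    destruct (proj2 (proj2 (Hnx (code k) (beta (code k)) (Hb (code k)))) k eq_refl Hk) as [H|H];
    destruct (Hmon _ _ Hn) as [H'|H'].
    - left. eapply ltTr; [exact H|exact H'].
    - left. simpl in H'. rewrite <- H'. exact H.
    - left. rewrite H. exact H'.
    - right. simpl in H'. rewrite <- H'. exact H. }
  set (io := fun n (p : Tt) => match n with 0 => p | S n' => liftm (beta n') p end).
  assert (Hle : forall n p, Dm (Some (beta n)) p -> oleT (io n p) (top (Some (beta n)))).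
  { intros [|n] p Hp; simpl.
    - apply (D_le lt Hwo (Some _)). exact Hp.
    - apply lift_le; auto. }
  assert (Htop : forall n, olt (top (Some (beta n))) (top a)).
  { intro n. apply (top_mono lt Hwo). apply Hb. }
  exists (fun n => Some (beta n)), io. constructor.
  - intro n. apply Hb.
  - intros [b|] Hb'; [|destruct a; destruct Hb'].
    destruct (Hcof b Hb') as [N HN]. exists N. intros n Hn. destruct (HN n Hn) as [H|H].
    left; exact H. right; subst; auto.
  - intros [|n] p q Hp Hq Hpq; simpl; auto. eapply lift_mono; eauto.
  - intros n p Hp. eapply (oleT_olt_trans lt Hwo); [apply Hle; auto|apply Htop].
  - intros m n p q Hmn Hp Hq. destruct n as [|n]; [lia|].
    eapply (oleT_olt_trans lt Hwo); [apply Hle; eauto|].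
    apply (oleT_olt_trans lt Hwo _ (top (Some (beta n)))); [ |apply (lift_gt _ (beta (S n))); eauto].
    apply (top_mono_le lt Hwo).
    destruct (Hmon m n ltac:(lia)) as [H|H]. left; exact H. right; rewrite H; auto.
  - intros r Hr. destruct r as [f|]; [|destruct a; destruct Hr].
    assert (Hbel : forall i, proj1_sig f i <> 0 -> below i).
    { intros i Hi. destruct a as [ka|]; simpl in *; auto. apply (lt_e_Bel lt Hwo) in Hr. apply Hr; auto. }
    destruct (fs_of f) as [lf Hlf].
    destruct (kmax lt Hwo (fun i => proj1_sig f i <> 0) lf) as [L [HL [_ HLmax]]].
    { destruct (nz_of f) as [k Hk]. exists k. split; auto. }
    destruct (Hcof L (Hbel L HL)) as [N HN].
    assert (HQ : exists n, oleT (Some f) (top (Some (beta n)))).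
    { exists (S N). left. simpl. apply (Bel_lt lt Hwo). intros i Hi.
      assert (Hi' : lt i L \/ i = L).
      { destruct (HLmax i Hi (Hlf i Hi)) as [E|E]; auto. }
      assert (HLb : lt L (beta (S N))).
      { destruct (HN N (le_n N)) as [H|H]. eapply ltTr; [exact H|apply Hinc]. rewrite H; apply Hinc. }
      destruct Hi' as [H'|H']; [eapply ltTr; eauto| subst; auto]. }
    destruct (nat_min _ HQ) as [n [Hn Hmin]].
    assert (HD : forall k p, oleT p (top (Some k)) -> Dm (Some k) p).
    { intros k p [H|H]. apply (lt_top_D lt Hwo); auto. rewrite H. apply D_top. }
    destruct n as [|n].
    + exists 0, (Some f). split; auto.
    + assert (Hgt : olt (top (Some (beta n))) (Some f)).
      { destruct (olt_trich lt Hwo (top (Some (beta n))) (Some f)) as [H|[H|H]]; auto;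
        exfalso; apply (Hmin n); auto; [right; auto|left; auto]. }
      simpl in Hgt. set (m := beta n) in *.
      destruct (classic (Zm m f)) as [Z|NZ].
      * set (f' := fun i => proj1_sig f i - e m i).
        assert (Hfm : proj1_sig f m <> 0).
        { intro E0. apply (cnf_irrefl lt (e m)). eapply cnf_trans; [exact Hwo|exact Hgt|].
          apply (Bel_lt lt Hwo). intros i Hi. destruct (ltT m i) as [H|[H|H]]; auto.
          rewrite Z in Hi; auto; lia. subst; tauto. }
        assert (Hf' : fin_supp f' /\ exists k, f' k <> 0).
        { split.
          - destruct (fs_of f) as [l Hl0]. exists l. intros k Hk. apply Hl0. unfold f' in Hk. lia.
          - apply NNPP; intro Hno.
            assert (Ef : forall k, proj1_sig f k = e m k).
            { intro k. destruct (Nat.eq_dec (f' k) 0) as [E|E]; [|exfalso; eauto].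
              unfold f' in E. destruct (classic (k = m)). subst; rewrite e_jj in *; lia.
              rewrite e_ji in *; auto; lia. }
            apply (cnf_irrefl lt (e m)). eapply cnf_ext; [| |exact Hgt]; auto. }
        set (q := exist _ f' Hf' : @CNFpos K).
        exists (S n), (Some q). split.
        -- apply HD. left. simpl. apply (Bel_lt lt Hwo). intros i Hi. simpl in Hi. unfold f' in Hi.
           assert (lt i m \/ i = m).
           { destruct (ltT m i) as [H|[H|H]]; auto. rewrite Z in Hi; auto. lia. }
           destruct H as [H|H]; [eapply ltTr; [exact H|apply Hinc] | rewrite H; apply Hinc].
        -- simpl. destruct (excluded_middle_informative (Zm (beta n) q)) as [Zq|NZq].
           ++ apply Some_eq. intro k. simpl. unfold addf, f'.
              unfold m in *. destruct (classic (k = beta n)) as [E|E].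
              rewrite E, e_jj; lia. rewrite e_ji; auto; lia.
           ++ exfalso. apply NZq. intros i Hi. simpl. unfold f'. rewrite Z; auto.
      * exists (S n), (Some f). split; auto. simpl.
        destruct (excluded_middle_informative (Zm (beta n) f)); tauto.
Qed.

End Lim.

Close Scope nat_scope.
Open Scope R_scope.

Section Met.
Context {X : Type} (d : X -> X -> R) (Hmet : is_metric d).

Lemma d_nn : forall x y, 0 <= d x y. Proof. apply Hmet. Qed.
Lemma d_0 : forall x, d x x = 0. Proof. intro x. apply (proj1 (proj2 Hmet)). auto. Qed.
Lemma d_eq : forall x y, d x y = 0 -> x = y. Proof. intros x y. apply (proj1 (proj2 Hmet)). Qed.
Lemma d_sym : forall x y, d x y = d y x. Proof. apply Hmet. Qed.
Lemma d_tri : forall x y z, d x z <= d x y + d y z. Proof. apply Hmet. Qed.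
Lemma d_pos : forall x y, x <> y -> 0 < d x y.
Proof. intros x y H. destruct (d_nn x y) as [H1|H1]; auto. exfalso; apply H, d_eq; auto. Qed.

Definition closed (A : X -> Prop) := forall y, (forall e, 0 < e -> exists z, A z /\ d y z < e) -> A y.

Lemma closed_of_open : forall A, open_in d (fun y => ~ A y) -> closed A.
Proof.
  intros A HO y Hy. apply NNPP; intro Hn. destruct (HO y Hn) as [e [He HB]].
  destruct (Hy e He) as [z [Hz Hd]]. exact (HB z Hd Hz).
Qed.

Lemma acc_closed : forall A, closed (acc d A).
Proof.
  intros A y Hy e He. destruct (Hy (e/2) ltac:(lra)) as [w [Hw Hdw]].
  destruct (classic (w = y)) as [E|E].
  - subst. apply Hw; auto.
  - destruct (Hw (Rmin (e/2) (d w y)) ltac:(apply Rmin_pos; [lra|apply d_pos; auto])) as [z [Hz [Hzw Hdz]]].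
    exists z. split; auto. split.
    + intro Ezy; subst. pose proof (Rmin_r (e/2) (d w y)). lra.
    + pose proof (Rmin_l (e/2) (d w y)). pose proof (d_tri y w z). lra.
Qed.

Lemma acc_mono : forall (A B : X -> Prop), (forall z, A z -> B z) -> forall y, acc d A y -> acc d B y.
Proof. intros A B HAB y H e He. destruct (H e He) as [z [Hz Hd]]. eauto. Qed.

Lemma acc_ext : forall (A B : X -> Prop), (forall z, A z <-> B z) -> forall y, acc d A y <-> acc d B y.
Proof. intros A B E y; split; apply acc_mono; intro z; apply E. Qed.

Lemma acc_in_closed : forall A H, closed A -> forall y, acc d (fun z => A z /\ H z) y -> A y.
Proof. intros A H HA y Hy. apply HA. intros e He. destruct (Hy e He) as [z [[Hz _] [_ Hd]]]. eauto. Qed.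

Lemma acc_minus : forall A p y, acc d A y -> acc d (fun z => A z /\ z <> p) y.
Proof.
  intros A p y H e He. destruct (classic (y = p)) as [E|E].
  - subst. destruct (H e He) as [z [Hz [Hzp Hd]]]. exists z. auto.
  - destruct (H (Rmin e (d y p)) ltac:(apply Rmin_pos; [lra|apply d_pos; auto])) as [z [Hz [Hzy Hd]]].
    exists z. pose proof (Rmin_l e (d y p)). pose proof (Rmin_r e (d y p)). split; [split; auto|split; auto; lra].
    intro; subst; lra.
Qed.

Lemma accH : forall (A H : X -> Prop) p, (forall z, A z -> z <> p -> H z) ->
  forall y, acc d (fun z => A z /\ H z) y <-> acc d A y.
Proof.
  intros A H p HA y. split.
  - apply acc_mono. tauto.
  - intro Hy. apply (acc_minus A p) in Hy. revert Hy. apply acc_mono. intros z [Hz Hzp]. auto.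
Qed.

Lemma ball_open : forall x r, open_in d (ball d x r).
Proof.
  intros x r y Hy. unfold ball in *. exists (r - d x y). split. lra.
  intros z Hz. pose proof (d_tri x y z). lra.
Qed.

Definition PhiH (H : X -> Prop) (A : X -> Prop) : X -> Prop := acc d (fun y => A y /\ H y).

Context {K : Type} (lt : K -> K -> Prop) (Hwo : well_order lt).

Lemma iter_closed_dec : forall H A, closed A -> forall a,
  closed (iterate lt (PhiH H) A a) /\
  forall b y, ole lt b a -> iterate lt (PhiH H) A a y -> iterate lt (PhiH H) A b y.
Proof.
  intros H A HA a. induction (ltx_wf lt Hwo a) as [a _ IH].
  destruct (ord_cases lt a) as [Hz|[[b Hs]|Hl]].
  - split.
    + intros y Hy. apply (proj2 (iter_zero lt Hwo (PhiH H) A a y Hz)). apply HA. intros e He.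
      destruct (Hy e He) as [z [Hz0 Hd]]. exists z. split; auto. apply (iter_zero lt Hwo (PhiH H) A a z Hz); auto.
    + intros b y Hb Hy. destruct Hb as [Hb|Hb]. exfalso; apply (Hz b Hb). subst; auto.
  - split.
    + intros y Hy. apply (proj2 (iter_succ lt Hwo (PhiH H) A b a y Hs)). apply acc_closed. intros e He.
      destruct (Hy e He) as [z [Hz Hd]]. exists z. split; auto. exact (proj1 (iter_succ lt Hwo (PhiH H) A b a z Hs) Hz).
    + intros c y Hc Hy. destruct Hc as [Hc|Hc]; [|subst; auto].
      destruct Hs as [Hba Hm]. destruct (IH b Hba) as [Hcl Hdec].
      assert (Hyb : iterate lt (PhiH H) A b y).
      { apply (proj1 (iter_succ lt Hwo (PhiH H) A b a y (conj Hba Hm))) in Hy.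
        eapply acc_in_closed; eauto. }
      apply Hdec; auto. destruct (Hm c Hc) as [E|E]. right; auto. left; auto.
  - split.
    + intros y Hy. apply (proj2 (iter_limit lt Hwo (PhiH H) A a y Hl)). intros b Hb. destruct (IH b Hb) as [Hcl _].
      apply Hcl. intros e He. destruct (Hy e He) as [z [Hz Hd]]. exists z. split; auto.
      exact (proj1 (iter_limit lt Hwo (PhiH H) A a z Hl) Hz b Hb).
    + intros c y Hc Hy. destruct Hc as [Hc|Hc]; [|subst; auto].
      exact (proj1 (iter_limit lt Hwo (PhiH H) A a y Hl) Hy c Hc).
Qed.

End Met.

Section Good.
Context {X : Type} (d : X -> X -> R) (Hmet : is_metric d) (h : X -> R) (M : R).
Context {K : Type} (lt : K -> K -> Prop) (Hwo : well_order lt).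
Notation Tt := (omega_pow_interval K).
Notation olt := (olt lt).
Notation oleT := (oleT lt).
Notation top := (top (K:=K)).
Notation Dm := (Dm lt).
Notation It H A := (iterate lt (PhiH d H) A).

Definition cont (phi : X -> Tt) (F : X -> Prop) (u : X) : Prop :=
  (forall lo, olt lo (phi u) -> exists del, 0 < del /\ forall v, F v -> d u v < del -> olt lo (phi v)) /\
  (exists del, 0 < del /\ forall v, F v -> d u v < del -> oleT (phi v) (phi u)).

Definition bigh (u : X) := M < Rabs (h u).

Record good (a : option K) (x : X) (eps : R) (F : X -> Prop) (phi : X -> Tt) : Prop := {
  g_ball : forall u, F u -> d x u < eps;
  g_x : F x;
  g_h : forall u, F u -> u <> x -> bigh u;
  g_cpt : compact_in d F;
  g_rng : forall u, F u -> Dm a (phi u);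
  g_inj : forall u v, F u -> F v -> phi u = phi v -> u = v;
  g_onto : forall p, Dm a p -> exists u, F u /\ phi u = p;
  g_top : phi x = top a;
  g_cont : forall u, F u -> cont phi F u;
  g_iter : forall H, (forall u, bigh u -> H u) -> forall g,
     (forall y, It H F g y -> F y) /\ (ole lt g a -> It H F g x) /\
     (forall y, It H F g y -> ole lt g a) /\ (forall y, It H F a y -> y = x)
}.

Lemma good_zero : forall a x eps, is_zero_ord lt a -> 0 < eps ->
  good a x eps (fun u => u = x) (fun _ => top a).
Proof.
  intros a x eps Hz Heps. constructor.
  - intros u ->. rewrite (d_0 d Hmet). auto.
  - auto.
  - intros u Hu Hne; tauto.
  - intros I U HU Hcov. destruct (Hcov x eq_refl) as [i Hi]. exists (i :: nil).
    intros y ->. exists i. split; [left; auto|auto].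
  - intros; apply D_top.
  - intros u v -> -> _; auto.
  - intros p Hp. exists x. split; auto. symmetry; apply (zero_D lt); auto.
  - auto.
  - intros u Hu. split.
    + intros lo Hlo. exists 1. split. lra. intros v Hv _. auto.
    + exists 1. split. lra. intros. right; auto.
  - intros H HH.
    assert (Cl : forall g y, It H (fun u => u = x) g y <-> (y = x /\ is_zero_ord lt g)).
    { intro g. induction (ltx_wf lt Hwo g) as [g _ IH]. intro y.
      destruct (ord_cases lt g) as [Hzg|[[b Hs]|Hl]].
      - rewrite (iter_zero lt Hwo _ _ g y Hzg). tauto.
      - rewrite (iter_succ lt Hwo _ _ b g y Hs). split.
        + intro Hy. exfalso. destruct (classic (y = x)) as [E|E].
          * subst. destruct (Hy 1 ltac:(lra)) as [z [[Hz1 _] [Hz2 _]]].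
            pose proof (proj1 (IH b (proj1 Hs) z) Hz1). tauto.
          * destruct (Hy (d y x) (d_pos d Hmet y x E)) as [z [[Hz1 _] [Hz2 Hz3]]].
            destruct (proj1 (IH b (proj1 Hs) z) Hz1) as [-> _]. lra.
        + intros [_ Hzg]. exfalso. eapply succ_not_zero; eauto.
      - rewrite (iter_limit lt Hwo _ _ g y Hl). split.
        + intro Hy. exfalso. destruct Hl as [Hnz Hns]. apply Hnz. intros b Hb.
          destruct (limit_between lt Hwo g b (conj Hnz Hns) Hb) as [c [Hbc Hcg]].
          destruct (proj1 (IH c Hcg y) (Hy c Hcg)) as [_ Hzc]. exact (Hzc b Hbc).
        + intros [_ Hzg]. exfalso. apply (proj1 Hl). auto. }
    intro g. split; [|split; [|split]].
    + intros y Hy. apply (proj1 (Cl g y)) in Hy. tauto.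
    + intro Hg. apply (proj2 (Cl g x)). split; auto. destruct Hg as [Hg|Hg]. exfalso; exact (Hz g Hg). subst; auto.
    + intros y Hy. apply (proj1 (Cl g y)) in Hy. apply (zero_ole lt Hwo). tauto.
    + intros y Hy. apply (proj1 (Cl a y)) in Hy. tauto.
Qed.

End Good.

Section Asm.
Context {X : Type} (d : X -> X -> R) (Hmet : is_metric d) (h : X -> R) (M : R).
Context {K : Type} (lt : K -> K -> Prop) (Hwo : well_order lt).
Notation Tt := (omega_pow_interval K).
Notation olt := (olt lt).
Notation oleT := (oleT lt).
Notation top := (top (K:=K)).
Notation Dm := (Dm lt).
Notation It H A := (iterate lt (PhiH d H) A).
Notation good := (good d h M lt).
Notation bigh := (bigh h M).

Context (a : option K) (gam : nat -> option K) (io : nat -> Tt -> Tt) (HB : Blocks lt a gam io).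
Context (x : X) (eps : R) (Heps : 0 < eps) (xs : nat -> X) (Fs : nat -> X -> Prop) (phis : nat -> X -> Tt).
Context (Ht0 : d x (xs 0) < eps / 2) (Htd : forall n, d x (xs (S n)) < d x (xs n) / 2)
        (Hxn : forall n, xs n <> x) (Hhx : forall n, bigh (xs n))
        (Hgood : forall n, good (gam n) (xs n) (d x (xs n) / 10) (Fs n) (phis n)).

Let t n := d x (xs n).
Let dtri := d_tri d Hmet.
Let dsym := d_sym d Hmet.

Lemma t_pos : forall n, 0 < t n.
Proof. intro n. apply (d_pos d Hmet). auto. Qed.

Lemma t_dec : forall m n, (m < n)%nat -> 2 * t n < t m.
Proof.
  intros m n Hmn. induction Hmn.
  - pose proof (Htd m). unfold t. lra.
  - pose proof (Htd m0). pose proof (t_pos m0). unfold t in *. lra.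
Qed.

Lemma t_le : forall m n, (m <= n)%nat -> t n <= t m.
Proof.
  intros m n H. destruct (Nat.eq_dec m n). subst; lra.
  pose proof (t_dec m n ltac:(lia)). pose proof (t_pos n). lra.
Qed.

Lemma t_small : forall del, 0 < del -> exists N, forall n, (N <= n)%nat -> 11/10 * t n < del.
Proof.
  intros del Hdel.
  assert (Hp : forall n, t n <= t 0 * (1/2)^n).
  { induction n. simpl; lra. simpl. pose proof (Htd n). unfold t in *. lra. }
  destruct (pow_lt_1_zero (1/2) ltac:(rewrite Rabs_pos_eq; lra) (del / (2 * (t 0 + 1))))
    as [N HN].
  { apply Rdiv_lt_0_compat. lra. pose proof (t_pos 0). lra. }
  exists N. intros n Hn. specialize (HN N (le_n N)).
  rewrite Rabs_pos_eq in HN by (apply pow_le; lra).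
  pose proof (t_le N n Hn). pose proof (Hp N). pose proof (t_pos 0).
  assert (t 0 * (1/2)^N <= (t 0 + 1) * (1/2)^N).
  { apply Rmult_le_compat_r. apply pow_le; lra. lra. }
  assert ((t 0 + 1) * (1/2)^N < (t 0 + 1) * (del / (2 * (t 0 + 1)))).
  { apply Rmult_lt_compat_l; lra. }
  assert ((t 0 + 1) * (del / (2 * (t 0 + 1))) = del / 2) by (field; lra).
  lra.
Qed.

Definition Ann n z := 9/10 * t n < d x z < 11/10 * t n.

Lemma F_ann : forall n z, Fs n z -> Ann n z.
Proof.
  intros n z Hz. pose proof (g_ball _ _ _ _ _ _ _ _ _ (Hgood n) z Hz).
  pose proof (dtri x (xs n) z). pose proof (dtri x z (xs n)). rewrite (dsym z (xs n)) in *.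
  unfold Ann, t. lra.
Qed.

Lemma sep : forall n m s z, 4/5 * t n < s < 6/5 * t n -> Ann m z ->
  s - s/20 < d x z < s + s/20 -> m = n.
Proof.
  intros n m s z Hs Hz Hd. unfold Ann in Hz.
  destruct (Nat.lt_trichotomy m n) as [H|[H|H]]; auto.
  - pose proof (t_dec m n H). lra.
  - pose proof (t_dec n m H). lra.
Qed.

Lemma wide : forall m s z, Ann m z -> 0 < s -> s - s/20 < d x z < s + s/20 ->
  4/5 * t m < s < 6/5 * t m.
Proof. intros m s z Hz Hs Hd. unfold Ann in Hz. lra. Qed.

Lemma near : forall y z, d y z < d x y / 20 -> d x y - d x y / 20 < d x z < d x y + d x y / 20.
Proof.
  intros y z H. pose proof (dtri x y z). pose proof (dtri x z y). rewrite (dsym z y) in *. lra.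
Qed.

Lemma Fs_disj : forall n m z, Fs n z -> Fs m z -> m = n.
Proof.
  intros n m z Hn Hm. pose proof (F_ann n z Hn). pose proof (F_ann m z Hm).
  apply (sep n m (d x z) z); auto. unfold Ann in *; lra.
  pose proof (t_pos n). unfold Ann in *. lra.
Qed.

Lemma x_notin : forall n, ~ Fs n x.
Proof.
  intros n H. pose proof (F_ann n x H). unfold Ann in *. rewrite (d_0 d Hmet) in *.
  pose proof (t_pos n). lra.
Qed.

Definition Fu (u : X) : Prop := u = x \/ exists n, Fs n u.

Lemma local_F : forall n u v, Fs n u -> Fu v -> d u v < d x u / 20 -> Fs n v.
Proof.
  intros n u v Hu [->|[m Hv]] Hd.
  - exfalso. pose proof (near u x Hd). rewrite (d_0 d Hmet) in *. pose proof (F_ann n u Hu).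
    pose proof (t_pos n). unfold Ann in *. lra.
  - pose proof (near u v Hd). pose proof (F_ann n u Hu). pose proof (F_ann m v Hv).
    assert (m = n) by (apply (sep n m (d x u) v); auto; unfold Ann in *; lra). subst; auto.
Qed.

Lemma acc_union : forall (S : nat -> X -> Prop) (c : Prop), (forall n z, S n z -> Fs n z) -> forall y,
  acc d (fun z => (z = x /\ c) \/ exists n, S n z) y <->
  (y = x /\ forall N, exists n, (N <= n)%nat /\ exists z, S n z) \/ exists n, acc d (S n) y.
Proof.
  intros S c HS y. split.
  - intro Hy. destruct (classic (y = x)) as [E|E].
    + subst y. left. split; auto. intro N. pose proof (t_pos N).
      destruct (Hy (9/10 * t N) ltac:(lra)) as [z [[[Ez _]|[n Hz]] [Hzx Hd]]]. subst; tauto.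
      exists n. split; [|eauto]. pose proof (F_ann n z (HS n z Hz)). unfold Ann in *.
      destruct (Compare_dec.le_lt_dec N n) as [L|L]; auto. pose proof (t_dec n N L). pose proof (t_pos n).
      lra.
    + right. set (s := d x y). assert (Hs : 0 < s) by (apply (d_pos d Hmet); auto).
      destruct (Hy (s/20) ltac:(lra)) as [z [[[Ez _]|[m Hz]] [Hzy Hd]]].
      * subst z. exfalso. pose proof (near y x Hd). rewrite (d_0 d Hmet) in *. unfold s in *. lra.
      * exists m. pose proof (near y z Hd). pose proof (F_ann m z (HS m z Hz)).
        assert (Hw : 4/5 * t m < s < 6/5 * t m) by (apply (wide m s z); auto).
        intros e He. destruct (Hy (Rmin e (s/20)) ltac:(apply Rmin_pos; lra)) as [z' [[[Ez' _]|[m' Hz']] [Hzy' Hd']]].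
        -- subst z'. exfalso. pose proof (Rmin_r e (s/20)). pose proof (near y x ltac:(unfold s in *; lra)).
           rewrite (d_0 d Hmet) in *. unfold s in *. lra.
        -- pose proof (Rmin_l e (s/20)). pose proof (Rmin_r e (s/20)).
           pose proof (near y z' ltac:(unfold s in *; lra)).
           assert (m' = m) by (apply (sep m m' s z'); auto; apply F_ann; apply HS; auto).
           subst m'. exists z'. split; auto. split; auto. lra.
  - intros [[-> Hinf]|[n Hn]].
    + intros e He. destruct (t_small e He) as [N HN]. destruct (Hinf N) as [n [Hn [z Hz]]].
      exists z. split; [right; eauto|]. split.
      * intro E; subst. apply (x_notin n). apply HS; auto.
      * pose proof (F_ann n z (HS n z Hz)). pose proof (HN n Hn). unfold Ann in *. lra.
    + revert Hn. apply acc_mono. intros z Hz. right; eauto.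
Qed.


Let Brng := B_rng _ _ _ _ HB.
Let Bmono := B_mono _ _ _ _ HB.
Let Bord := B_ord _ _ _ _ HB.
Let Bonto := B_onto _ _ _ _ HB.
Let Bgam := B_gam _ _ _ _ HB.
Let Bcof := B_cof _ _ _ _ HB.
Let Grng n := g_rng _ _ _ _ _ _ _ _ _ (Hgood n).
Let Ginj n := g_inj _ _ _ _ _ _ _ _ _ (Hgood n).
Let Gonto n := g_onto _ _ _ _ _ _ _ _ _ (Hgood n).
Let Gtop n := g_top _ _ _ _ _ _ _ _ _ (Hgood n).
Let Gcont n := g_cont _ _ _ _ _ _ _ _ _ (Hgood n).
Let Gx n := g_x _ _ _ _ _ _ _ _ _ (Hgood n).
Let Gh n := g_h _ _ _ _ _ _ _ _ _ (Hgood n).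
Let Gcpt n := g_cpt _ _ _ _ _ _ _ _ _ (Hgood n).
Let Giter n := g_iter _ _ _ _ _ _ _ _ _ (Hgood n).
Let oT := olt_trich lt Hwo.
Let oTr := olt_trans lt Hwo.
Let oA := olt_asym lt Hwo.
Let oI := olt_irrefl lt.

Definition phiF (u : X) : Tt :=
  match excluded_middle_informative (exists n, Fs n u) with
  | left H => io (proj1_sig (constructive_indefinite_description _ H))
                 (phis (proj1_sig (constructive_indefinite_description _ H)) u)
  | right _ => top a
  end.

Lemma phi_n : forall n u, Fs n u -> phiF u = io n (phis n u).
Proof.
  intros n u Hu. unfold phiF. destruct (excluded_middle_informative (exists n, Fs n u)) as [H|H].
  - destruct (constructive_indefinite_description _ H) as [m Hm]; simpl.
    rewrite (Fs_disj n m u Hu Hm). auto.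
  - exfalso; eauto.
Qed.

Lemma phi_x : phiF x = top a.
Proof.
  unfold phiF. destruct (excluded_middle_informative (exists n, Fs n x)) as [[n H]|H]; auto.
  exfalso; eapply x_notin; eauto.
Qed.

Lemma io_lt : forall n u, Fs n u -> olt (phiF u) (top a).
Proof. intros n u Hu. rewrite (phi_n n u Hu). apply Brng. apply Grng; auto. Qed.

Lemma asm_ball : forall u, Fu u -> d x u < eps.
Proof.
  intros u [->|[n Hu]]. rewrite (d_0 d Hmet). auto.
  pose proof (F_ann n u Hu). pose proof (t_le 0 n ltac:(lia)). unfold Ann, t in *. lra.
Qed.

Lemma asm_h : forall u, Fu u -> u <> x -> bigh u.
Proof.
  intros u [->|[n Hu]] Hne. tauto.
  destruct (classic (u = xs n)) as [->|E]. auto. apply (Gh n); auto.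
Qed.

Lemma asm_cpt : compact_in d Fu.
Proof.
  intros I U HU Hcov. destruct (Hcov x (or_introl eq_refl)) as [i0 Hi0].
  destruct (HU i0 x Hi0) as [del [Hdel Hball]].
  destruct (t_small del Hdel) as [N HN].
  assert (Hfin : forall N', exists l : list I, forall n z, (n < N')%nat -> Fs n z -> exists i, In i l /\ U i z).
  { induction N' as [|N' IH].
    - exists nil. intros n z Hn; lia.
    - destruct IH as [l Hl].
      destruct (Gcpt N' I U HU) as [l' Hl'].
      { intros z Hz. apply Hcov. right; eauto. }
      exists (l ++ l'). intros n z Hn Hz. destruct (Nat.eq_dec n N') as [->|E].
      + destruct (Hl' z Hz) as [i [Hi Hu]]. exists i. split; auto. apply in_or_app; auto.
      + destruct (Hl n z ltac:(lia) Hz) as [i [Hi Hu]]. exists i. split; auto. apply in_or_app; auto. }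
  destruct (Hfin N) as [l Hl]. exists (i0 :: l). intros z [->|[n Hz]].
  - exists i0. split; [left|]; auto.
  - destruct (Compare_dec.le_lt_dec N n) as [L|L].
    + exists i0. split; [left; auto|]. apply Hball. pose proof (F_ann n z Hz). pose proof (HN n L).
      unfold Ann in *. lra.
    + destruct (Hl n z L Hz) as [i [Hi Hu]]. exists i. split; [right|]; auto.
Qed.

Lemma asm_rng : forall u, Fu u -> Dm a (phiF u).
Proof.
  intros u [->|[n Hu]]. rewrite phi_x. apply D_top.
  apply (lt_top_D lt Hwo). apply (io_lt n); auto.
Qed.

Lemma io_inj : forall n m p q, Dm (gam n) p -> Dm (gam m) q -> io n p = io m q -> n = m /\ p = q.
Proof.
  intros n m p q Hp Hq E.
  destruct (Nat.lt_trichotomy n m) as [L|[L|L]].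
  - exfalso. pose proof (Bord n m p q L Hp Hq). rewrite E in *. eapply oI; eauto.
  - subst m. split; auto. destruct (oT p q) as [L|[L|L]]; auto; exfalso.
    + pose proof (Bmono n p q Hp Hq L). rewrite E in *. eapply oI; eauto.
    + pose proof (Bmono n q p Hq Hp L). rewrite E in *. eapply oI; eauto.
  - exfalso. pose proof (Bord m n q p L Hq Hp). rewrite E in *. eapply oI; eauto.
Qed.

Lemma asm_inj : forall u v, Fu u -> Fu v -> phiF u = phiF v -> u = v.
Proof.
  intros u v [->|[n Hu]] [->|[m Hv]] E; auto.
  - exfalso. rewrite phi_x in E. pose proof (io_lt m v Hv). rewrite <- E in *. eapply oI; eauto.
  - exfalso. rewrite phi_x in E. pose proof (io_lt n u Hu). rewrite E in *. eapply oI; eauto.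
  - rewrite (phi_n n u Hu), (phi_n m v Hv) in E.
    destruct (io_inj n m _ _ (Grng n u Hu) (Grng m v Hv) E) as [-> E2].
    apply (Ginj m); auto.
Qed.

Lemma asm_onto : forall p, Dm a p -> exists u, Fu u /\ phiF u = p.
Proof.
  intros p Hp. destruct (D_le lt Hwo a p Hp) as [L|L].
  - destruct (Bonto p L) as [n [q [Hq E]]]. destruct (Gonto n q Hq) as [u [Hu Eu]].
    exists u. split. right; eauto. rewrite (phi_n n u Hu). congruence.
  - exists x. split. left; auto. rewrite phi_x; auto.
Qed.

Lemma asm_cont : forall u, Fu u -> cont d lt phiF Fu u.
Proof.
  intros u [->|[n Hu]].
  - split.
    + intros lo Hlo. rewrite phi_x in Hlo. destruct (Bonto lo Hlo) as [n0 [q0 [Hq0 E0]]].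
      pose proof (t_pos (S n0)). exists (9/10 * t (S n0)). split. lra.
      intros v [->|[n Hv]] Hd. rewrite phi_x. auto.
      rewrite (phi_n n v Hv). rewrite <- E0. apply Bord; [ | exact Hq0 | apply Grng; exact Hv].
      pose proof (F_ann n v Hv). unfold Ann in *.
      destruct (Compare_dec.le_lt_dec n n0) as [L|L]; [|lia].
      pose proof (t_le n (S n0) ltac:(lia)). lra.
    + exists 1. split. lra. intros v Hv _. rewrite phi_x. apply (D_le lt Hwo). apply asm_rng; auto.
  - pose proof (F_ann n u Hu). assert (Hd0 : 0 < d x u / 20) by (pose proof (t_pos n); unfold Ann in *; lra).
    destruct (Gcont n u Hu) as [Clo [d1 [Hd1 Cup]]].
    split.
    + intros lo Hlo. rewrite (phi_n n u Hu) in Hlo.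
      destruct (classic (exists q0, Dm (gam n) q0 /\ oleT (io n q0) lo)) as [[q0 [Hq0 Hle]]|Hno].
      * assert (Hlt : olt lo (top a)) by (eapply oTr; [exact Hlo|apply Brng; apply Grng; auto]).
        destruct (Bonto lo Hlt) as [m [q [Hq Eq]]].
        assert (m = n).
        { destruct (Nat.lt_trichotomy m n) as [L|[L|L]]; auto; exfalso.
          - pose proof (Bord m n q q0 L Hq Hq0). rewrite Eq in *.
            eapply (oleT_not_olt lt Hwo); eauto.
          - pose proof (Bord n m (phis n u) q L (Grng n u Hu) Hq). rewrite Eq in *. eapply oA; eauto. }
        subst m.
        assert (Hqp : olt q (phis n u)).
        { destruct (oT q (phis n u)) as [L|[L|L]]; auto; exfalso.
          - subst. eapply oI; eauto.
          - pose proof (Bmono n _ _ (Grng n u Hu) Hq L). rewrite Eq in *. eapply oA; eauto. }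
        destruct (Clo q Hqp) as [d2 [Hd2 C2]].
        exists (Rmin (d x u / 20) d2). split. apply Rmin_pos; lra.
        intros v Hv Hd. pose proof (Rmin_l (d x u / 20) d2). pose proof (Rmin_r (d x u / 20) d2).
        assert (Hv' : Fs n v) by (apply (local_F n u v); auto; lra).
        rewrite (phi_n n v Hv'). rewrite <- Eq. exact (Bmono n q (phis n v) Hq (Grng n v Hv') (C2 v Hv' ltac:(lra))).
      * exists (d x u / 20). split; auto. intros v Hv Hd.
        assert (Hv' : Fs n v) by (apply (local_F n u v); auto).
        rewrite (phi_n n v Hv'). destruct (oT lo (io n (phis n v))) as [L|[L|L]]; auto; exfalso; apply Hno.
        exists (phis n v). split. apply Grng; auto. right; auto.
        exists (phis n v). split. apply Grng; auto. left; auto.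
    + exists (Rmin (d x u / 20) d1). split. apply Rmin_pos; lra.
      intros v Hv Hd. pose proof (Rmin_l (d x u / 20) d1). pose proof (Rmin_r (d x u / 20) d1).
      assert (Hv' : Fs n v) by (apply (local_F n u v); auto; lra).
      rewrite (phi_n n v Hv'), (phi_n n u Hu).
      destruct (Cup v Hv' ltac:(lra)) as [L|L].
      * left. apply Bmono; auto; apply Grng; auto.
      * right. rewrite L; auto.
Qed.


Lemma asm_iter_char : forall H, (forall u, bigh u -> H u) -> forall g y,
  It H Fu g y <-> (y = x /\ ole lt g a) \/ exists n, It H (Fs n) g y.
Proof.
  intros H HH.
  assert (HFn : forall n z, Fs n z -> H z).
  { intros n z Hz. apply HH. destruct (classic (z = xs n)) as [->|E]. auto. apply (Gh n); auto. }
  assert (HIn : forall n g z, It H (Fs n) g z -> Fs n z).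
  { intros n g z Hz. exact (proj1 (Giter n H HH g) z Hz). }
  intro g. induction (ltx_wf lt Hwo g) as [g _ IH]. intro y.
  destruct (ord_cases lt g) as [Hzg|[[b Hs]|Hl]].
  - rewrite (iter_zero lt Hwo (PhiH d H) Fu g y Hzg). unfold Fu. split.
    + intros [->|[n Hn]]. left; split; auto. apply (zero_ole lt Hwo); auto.
      right. exists n. apply (iter_zero lt Hwo (PhiH d H) (Fs n) g y Hzg); auto.
    + intros [[-> _]|[n Hn]]. auto. right. exists n. apply (iter_zero lt Hwo (PhiH d H) (Fs n) g y Hzg); auto.
  - assert (Hba : ltx lt b g) by apply Hs.
    rewrite (iter_succ lt Hwo (PhiH d H) Fu b g y Hs). unfold PhiH.
    rewrite (accH d Hmet _ H x).
    2:{ intros z Hz Hzx. destruct (proj1 (IH b Hba z) Hz) as [[E _]|[n Hn]]. tauto. eauto. }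
    rewrite (acc_ext d _ _ (IH b Hba) y).
    rewrite (acc_union (fun n => It H (Fs n) b) (ole lt b a)); [|intros n z Hz; eauto].
    assert (E1 : forall n, It H (Fs n) g y <-> acc d (It H (Fs n) b) y).
    { intro n. rewrite (iter_succ lt Hwo (PhiH d H) (Fs n) b g y Hs). unfold PhiH.
      apply (accH d Hmet _ H y). intros z Hz _. eauto. }
    assert (E2 : (forall N, exists n, (N <= n)%nat /\ exists z, It H (Fs n) b z) <-> ole lt g a).
    { split.
      - intro Hinf. destruct (Hinf 0%nat) as [n [_ [z Hz]]].
        pose proof (proj1 (proj2 (proj2 (Giter n H HH b))) z Hz) as Hbn.
        apply (succ_le lt Hwo b g a Hs). eapply (ole_ltx_trans lt Hwo); eauto.
      - intros Hga N. assert (Hb' : ltx lt b a) by (eapply (ltx_ole_trans lt Hwo); eauto).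
        destruct (Bcof b Hb') as [N0 HN0]. exists (Nat.max N N0). split. lia.
        exists (xs (Nat.max N N0)). apply (Giter (Nat.max N N0) H HH b). apply HN0. lia. }
    split.
    + intros [[-> Hinf]|[n Hn]]. left. split; auto. apply E2; auto. right. exists n. apply E1; auto.
    + intros [[-> Hga]|[n Hn]]. left. split; auto. apply E2; auto. right. exists n. apply E1; auto.
  - rewrite (iter_limit lt Hwo (PhiH d H) Fu g y Hl). split.
    + intro Hy. destruct (classic (y = x)) as [->|E].
      * left. split; auto. apply (not_ltx_ole lt Hwo). intro Hag.
        destruct (limit_between lt Hwo g a Hl Hag) as [c [Hac Hcg]].
        destruct (proj1 (IH c Hcg x) (Hy c Hcg)) as [[_ Hca]|[n Hn]].
        -- eapply (ole_not_ltx lt Hwo); eauto.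
        -- eapply x_notin. eapply HIn; eauto.
      * right. assert (Hb0 : exists b0, ltx lt b0 g).
        { apply NNPP; intro Hn. apply (proj1 Hl). intros b Hb. apply Hn; eauto. }
        destruct Hb0 as [b0 Hb0].
        destruct (proj1 (IH b0 Hb0 y) (Hy b0 Hb0)) as [[E' _]|[n0 Hn0]]; [tauto|].
        exists n0. apply (iter_limit lt Hwo (PhiH d H) (Fs n0) g y Hl). intros b Hb.
        destruct (proj1 (IH b Hb y) (Hy b Hb)) as [[E' _]|[n Hn]]; [tauto|].
        assert (n = n0) by (apply (Fs_disj n0 n y); eapply HIn; eauto). subst; auto.
    + intros [[-> Hga]|[n Hn]] b Hb.
      * apply (IH b Hb). left. split; auto. left. eapply (ltx_ole_trans lt Hwo); eauto.
      * apply (IH b Hb). right. exists n. apply (proj1 (iter_limit lt Hwo (PhiH d H) (Fs n) g y Hl) Hn); auto.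
Qed.

Lemma asm_good : good a x eps Fu phiF.
Proof.
  constructor.
  - apply asm_ball.
  - left; auto.
  - apply asm_h.
  - apply asm_cpt.
  - apply asm_rng.
  - apply asm_inj.
  - apply asm_onto.
  - apply phi_x.
  - apply asm_cont.
  - intros H HH g. pose proof (asm_iter_char H HH) as C. split; [|split; [|split]].
    + intros y Hy. destruct (proj1 (C g y) Hy) as [[-> _]|[n Hn]]. left; auto.
      right; exists n. exact (proj1 (Giter n H HH g) y Hn).
    + intro Hg. apply C. left; auto.
    + intros y Hy. destruct (proj1 (C g y) Hy) as [[_ Hg]|[n Hn]]. auto.
      left. eapply (ole_ltx_trans lt Hwo). exact (proj1 (proj2 (proj2 (Giter n H HH g))) y Hn). apply Bgam.
    + intros y Hy. destruct (proj1 (C a y) Hy) as [[-> _]|[n Hn]]. auto. exfalso.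
      pose proof (proj1 (proj2 (proj2 (Giter n H HH a))) y Hn).
      eapply (ltx_irrefl lt Hwo). eapply (ole_ltx_trans lt Hwo); [eauto|apply Bgam].
Qed.

End Asm.

Lemma blocks_exist : forall {K : Type} (lt : K -> K -> Prop), well_order lt -> countable_type K ->
  forall a, ~ is_zero_ord lt a -> exists gam io, Blocks lt a gam io.
Proof.
  intros K lt Hwo Hc a Hz. destruct (ord_cases lt a) as [H|[[b Hs]|Hl]].
  - tauto.
  - destruct b as [j|]. eapply blocks_succ; eauto. destruct Hs as [[] _].
  - eapply blocks_limit; eauto.
Qed.

Section Main.
Context {X : Type} (d : X -> X -> R) (Hmet : is_metric d) (h : X -> R) (M : R).
Context {K : Type} (lt : K -> K -> Prop) (Hwo : well_order lt) (Hcount : countable_type K).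
Context (P : X -> Prop) (HPc : closed d P).

Notation PI := (iterate lt (PhiH d (bigh h M)) P).

Lemma main_ind : forall a x, PI a x -> forall eps, 0 < eps ->
  exists F phi, good d h M lt a x eps F phi.
Proof.
  intro a. induction (ltx_wf lt Hwo a) as [a _ IH]. intros x Hx eps Heps.
  destruct (classic (is_zero_ord lt a)) as [Hz|Hz].
  { exists (fun u => u = x), (fun _ => top a). apply good_zero; auto. }
  destruct (blocks_exist lt Hwo Hcount a Hz) as [gam [io HB]].
  assert (Hpt : forall n r, exists y, 0 < r -> PI (gam n) y /\ bigh h M y /\ y <> x /\ d x y < r).
  { intros n r. destruct (classic (0 < r)) as [Hr|Hr]; [|exists x; tauto].
    destruct (succ_exists lt Hwo a (gam n) (B_gam _ _ _ _ HB n)) as [c [Hs Hca]].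
    pose proof (proj2 (iter_closed_dec d Hmet lt Hwo (bigh h M) P HPc a) c x Hca Hx) as Hxc.
    apply (iter_succ lt Hwo (PhiH d (bigh h M)) P (gam n) c x Hs) in Hxc.
    destruct (Hxc r Hr) as [y [[Hy1 Hy2] [Hy3 Hy4]]]. exists y. intros _. auto. }
  set (sel := fun n r => proj1_sig (constructive_indefinite_description _ (Hpt n r))).
  assert (Hsel : forall n r, 0 < r -> PI (gam n) (sel n r) /\ bigh h M (sel n r) /\ sel n r <> x /\ d x (sel n r) < r).
  { intros n r Hr. unfold sel. destruct (constructive_indefinite_description _ (Hpt n r)) as [y Hy]. simpl; auto. }
  set (xs := fix xs (n : nat) : X := match n with 0%nat => sel 0%nat (eps/2) | S m => sel (S m) (d x (xs m) / 2) end).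
  assert (Hxs : forall n, PI (gam n) (xs n) /\ bigh h M (xs n) /\ xs n <> x).
  { induction n as [|n IHn].
    - simpl. destruct (Hsel 0%nat (eps/2) ltac:(lra)) as [A [B [C _]]]. auto.
    - simpl. fold xs. destruct IHn as [_ [_ Hne]]. pose proof (d_pos d Hmet x (xs n) (not_eq_sym Hne)).
      destruct (Hsel (S n) (d x (xs n) / 2) ltac:(lra)) as [A [B [C _]]]. auto. }
  assert (Ht0 : d x (xs 0%nat) < eps / 2).
  { simpl. apply (Hsel 0%nat (eps/2)). lra. }
  assert (Htd : forall n, d x (xs (S n)) < d x (xs n) / 2).
  { intro n. simpl. fold xs. destruct (Hxs n) as [_ [_ Hne]]. pose proof (d_pos d Hmet x (xs n) (not_eq_sym Hne)).
    apply (Hsel (S n) (d x (xs n) / 2)). lra. }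
  assert (HIH : forall n, exists FP : (X -> Prop) * (X -> omega_pow_interval K),
     good d h M lt (gam n) (xs n) (d x (xs n) / 10) (fst FP) (snd FP)).
  { intro n. destruct (Hxs n) as [A [_ C]]. pose proof (d_pos d Hmet x (xs n) (not_eq_sym C)).
    destruct (IH (gam n) (B_gam _ _ _ _ HB n) (xs n) A (d x (xs n) / 10) ltac:(lra)) as [F [phi G]].
    exists (F, phi). auto. }
  set (FP := fun n => proj1_sig (constructive_indefinite_description _ (HIH n))).
  assert (HFP : forall n, good d h M lt (gam n) (xs n) (d x (xs n) / 10) (fst (FP n)) (snd (FP n))).
  { intro n. unfold FP. destruct (constructive_indefinite_description _ (HIH n)); simpl; auto. }
  exists (Fu x (fun n => fst (FP n))), (phiF a io (fun n => fst (FP n)) (fun n => snd (FP n))).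
  apply (asm_good d Hmet h M lt Hwo a gam io HB x eps Heps xs); auto.
  - intro n. apply Hxs.
  - intro n. apply Hxs.
Qed.

End Main.

Section Fin.
Context {K : Type} (lt : K -> K -> Prop) (Hwo : well_order lt).
Notation Tt := (omega_pow_interval K).
Notation olt := (olt lt).
Notation oleT := (oleT lt).

Lemma tsucc : forall f : @CNFpos K, exists b, olt (Some f) b /\ forall z, olt z b -> oleT z (Some f).
Proof.
  intro f. destruct (min_exists lt Hwo (fun c => exists k, c = Some k)) as [m [[k0 ->] Hmin]].
  { destruct (nz_of f) as [k _]. exists (Some k); eauto. }
  assert (Hk0 : forall k, k <> k0 -> lt k0 k).
  { intros k Hk. destruct (Hmin (Some k) (ex_intro _ k eq_refl)) as [H|H]. exact H. inversion H; subst; tauto. }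
  exists (Some (shift (e k0) (fs_e k0) f)). split.
  - simpl. apply (cnf_add_pos lt Hwo). apply fs_of. apply fs_e. exists k0. rewrite e_jj; lia.
  - intros [g|] Hz; [|destruct Hz]. simpl in Hz. destruct Hz as [k [H1 H2]]. unfold addf in *.
    destruct (classic (k = k0)) as [->|Ek].
    + rewrite e_jj in H1. assert (Hab : forall j, j <> k0 -> proj1_sig g j = proj1_sig f j).
      { intros j Hj. rewrite H2 by auto. rewrite e_ji; auto; lia. }
      destruct (Nat.eq_dec (proj1_sig g k0) (proj1_sig f k0)) as [E|E].
      * right. apply Some_eq. intro j. destruct (classic (j = k0)) as [->|Ej]; auto.
      * left. simpl. exists k0. split. lia. intros j Hj. apply Hab. intro; subst; eapply (lt_irrefl lt Hwo); eauto.
    + left. simpl. exists k. rewrite e_ji in H1 by auto. split. lia.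
      intros j Hj. rewrite H2 by auto. rewrite e_ji. lia. intro; subst.
      apply (lt_irrefl lt Hwo k0). eapply (lt_trans lt Hwo); eauto.
Qed.

Context {X : Type} (d : X -> X -> R) (Hmet : is_metric d).

Lemma inv_cont : forall (F : X -> Prop) (phi : X -> Tt) (psi : Tt -> X),
  compact_in d F -> (forall u, F u -> cont d lt phi F u) ->
  (forall u v, F u -> F v -> phi u = phi v -> u = v) ->
  (forall p, F (psi p)) -> (forall p, phi (psi p) = p) ->
  forall V : X -> Prop, (forall u, F u -> V u -> exists e, 0 < e /\ forall v, F v -> d u v < e -> V v) ->
  order_open (opi_lt lt) (fun p => V (psi p)).
Proof.
  intros F phi psi Hc Hct Hinj HF Hpp V HV p Hp.
  set (Pc := fun (c : X) (del : R) =>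
     (V c /\ forall v, F v -> d c v < del -> V v) \/
     (olt (phi c) p /\ forall v, F v -> d c v < del -> oleT (phi v) (phi c)) \/
     (olt p (phi c) /\ forall v, F v -> d c v < del -> olt p (phi v))).
  assert (Hdel : forall c : {c | F c}, exists del, 0 < del /\ Pc (proj1_sig c) del).
  { intros [c Hcf]. simpl. destruct (classic (V c)) as [Vc|NVc].
    - destruct (HV c Hcf Vc) as [e [He He']]. exists e. split; auto. left; auto.
    - assert (Hne : phi c <> p).
      { intro E. apply NVc. rewrite (Hinj c (psi p)); auto. rewrite Hpp; auto. }
      destruct (olt_trich lt Hwo (phi c) p) as [L|[L|L]]; [| tauto |].
      + destruct (Hct c Hcf) as [_ [del [Hd Hd']]]. exists del. split; auto. right; left; auto.
      + destruct (Hct c Hcf) as [Hlo _]. destruct (Hlo p L) as [del [Hd Hd']].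
        exists del. split; auto. right; right; auto. }
  set (df := fun c => proj1_sig (constructive_indefinite_description _ (Hdel c))).
  assert (Hdf : forall c, 0 < df c /\ Pc (proj1_sig c) (df c)).
  { intro c. unfold df. destruct (constructive_indefinite_description _ (Hdel c)); simpl; auto. }
  destruct (Hc {c | F c} (fun i => ball d (proj1_sig i) (df i))) as [l Hl].
  { intro i. apply ball_open; auto. }
  { intros c Hcf. exists (exist _ c Hcf). unfold ball. simpl. rewrite (d_0 d Hmet). apply Hdf. }
  assert (Hlo : forall l : list {c | F c}, exists lo : option Tt, (forall a, lo = Some a -> olt a p) /\
     forall i, In i l -> olt (phi (proj1_sig i)) p -> exists a, lo = Some a /\ oleT (phi (proj1_sig i)) a).
  { induction l0 as [|i l' [lo' [H1 H2]]].
    - exists None. split. intros a E; discriminate. intros i [].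
    - destruct (classic (olt (phi (proj1_sig i)) p)) as [Li|Li].
      + destruct lo' as [a'|].
        * destruct (olt_trich lt Hwo a' (phi (proj1_sig i))) as [L|[L|L]].
          -- exists (Some (phi (proj1_sig i))). split. intros a E; inversion E; subst; auto.
             intros j [->|Hj] Lj. exists (phi (proj1_sig j)). split; auto. right; auto.
             destruct (H2 j Hj Lj) as [a [Ea Ha]]. inversion Ea; subst.
             exists (phi (proj1_sig i)). split; auto. left. eapply (oleT_olt_trans lt Hwo); eauto.
          -- exists (Some a'). split; auto. intros j [->|Hj] Lj. exists a'. split; auto. right; auto.
             auto.
          -- exists (Some a'). split; auto. intros j [->|Hj] Lj. exists a'. split; auto. left; auto.
             auto.
        * exists (Some (phi (proj1_sig i))). split. intros a E; inversion E; subst; auto.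
          intros j [->|Hj] Lj. exists (phi (proj1_sig j)). split; auto. right; auto.
          destruct (H2 j Hj Lj) as [a [Ea Ha]]. discriminate.
      + exists lo'. split; auto. intros j [->|Hj] Lj. tauto. auto. }
  destruct (Hlo l) as [lo [Hlo1 Hlo2]].
  assert (Hhi : exists hi : option Tt, (forall b, hi = Some b -> olt p b) /\
            forall z, (forall b, hi = Some b -> olt z b) -> oleT z p).
  { destruct p as [f|].
    - destruct (tsucc f) as [b [Hb1 Hb2]]. exists (Some b). split. intros b' E; inversion E; subst; auto.
      intros z Hz. apply Hb2. apply Hz; auto.
    - exists None. split. intros b E; discriminate. intros [z|] _. left; simpl; auto. right; auto. }
  destruct Hhi as [hi [Hhi1 Hhi2]].
  exists lo, hi. split; auto. split; auto.
  intros z Hzl Hzh. destruct (Hl (psi z) (HF z)) as [i [Hi Hu]]. unfold ball in Hu.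
  destruct (Hdf i) as [_ [[Vc Hv]|[[Lc Hv]|[Lc Hv]]]].
  - apply Hv; auto.
  - exfalso. destruct (Hlo2 i Hi Lc) as [a [Ea Ha]]. specialize (Hzl a Ea).
    pose proof (Hv (psi z) (HF z) Hu) as Hw. rewrite Hpp in Hw.
    eapply (olt_irrefl lt z). eapply (oleT_olt_trans lt Hwo); [|exact Hzl].
    eapply (oleT_trans lt Hwo); eauto.
  - exfalso. pose proof (Hv (psi z) (HF z) Hu) as Hw. rewrite Hpp in Hw.
    pose proof (Hhi2 z Hzh). eapply (oleT_not_olt lt Hwo); eauto.
Qed.

End Fin.

Lemma sig_eq' : forall (A : Type) (P : A -> Prop) (a b : sig P), proj1_sig a = proj1_sig b -> a = b.
Proof. intros A P [a Ha] [b Hb] E; simpl in E; subst. f_equal. apply proof_irrelevance. Qed.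

Theorem lemma4p13
  (X : Type) (d : X -> X -> R) (Hpolish : polish_with_metric d)
  (h : X -> R) (M : R) (HM : 0 <= M)
  (K : Type) (lt : K -> K -> Prop) (Hwo : well_order lt) (Hcount : countable_type K)
  (P : X -> Prop) (HPclosed : open_in d (fun y => ~ P y))
  (x : X) (Hx : iterate lt (hM d h M) P None x) :
  forall eps, 0 < eps ->
  exists F : X -> Prop,
    compact_in d F /\
    (forall u, F u -> ball d x eps u) /\
    homeomorphic_to_omega_pow d lt F /\
    (forall u, F u -> u <> x -> M < Rabs (h u)) /\
    (forall y, iterate lt (hM d h M) F None y <-> y = x) /\
    (forall y, iterate lt (acc d) F None y <-> y = x).
Proof.
  intros eps Heps.
  assert (Hmet : is_metric d) by apply Hpolish.
  assert (HPc : closed d P) by (apply closed_of_open; auto).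
  destruct (main_ind d Hmet h M lt Hwo Hcount P HPc None x Hx eps Heps) as [F [phi G]].
  assert (Hiter := g_iter _ _ _ _ _ _ _ _ _ G).
  exists F. split; [|split; [|split; [|split; [|split]]]].
  - exact (g_cpt _ _ _ _ _ _ _ _ _ G).
  - intros u Hu. exact (g_ball _ _ _ _ _ _ _ _ _ G u Hu).
  - assert (Hon : forall p, exists u, F u /\ phi u = p).
    { intro p. apply (g_onto _ _ _ _ _ _ _ _ _ G). exact I. }
    set (psi0 := fun p => proj1_sig (constructive_indefinite_description _ (Hon p))).
    assert (Hpsi : forall p, F (psi0 p) /\ phi (psi0 p) = p).
    { intro p. unfold psi0. destruct (constructive_indefinite_description _ (Hon p)); simpl; auto. }
    assert (Hinj := g_inj _ _ _ _ _ _ _ _ _ G).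
    assert (Hct := g_cont _ _ _ _ _ _ _ _ _ G).
    exists (fun u => phi (proj1_sig u)), (fun p => exist _ (psi0 p) (proj1 (Hpsi p))).
    split; [|split; [|split]].
    + intros [u Hu]. apply sig_eq'. simpl. apply Hinj; auto. apply Hpsi. apply Hpsi.
    + intro p. simpl. apply Hpsi.
    + intros U HU [u Hu] HUu. simpl in HUu.
      destruct (HU (phi u) HUu) as [lo [hi [Hlo [Hhi HUz]]]].
      destruct (Hct u Hu) as [Clo [d2 [Hd2 Cup]]].
      assert (Hd1 : exists d1, 0 < d1 /\ forall v, F v -> d u v < d1 -> forall a, lo = Some a -> olt lt a (phi v)).
      { destruct lo as [a|].
        - destruct (Clo a (Hlo a eq_refl)) as [d1 [Hd1 C1]]. exists d1. split; auto.
          intros v Hv Hd a' E. inversion E; subst. auto.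
        - exists 1. split. lra. intros v Hv Hd a' E; discriminate. }
      destruct Hd1 as [d1 [Hd1 C1]].
      exists (Rmin d1 d2). split. apply Rmin_pos; auto.
      intros [v Hv] Hd. simpl in Hd. pose proof (Rmin_l d1 d2). pose proof (Rmin_r d1 d2).
      apply HUz.
      * intros a E. apply (C1 v Hv ltac:(lra) a E).
      * intros b E. eapply (oleT_olt_trans lt Hwo). apply (Cup v Hv ltac:(lra)). apply Hhi; auto.
    + intros V HV.
      set (V' := fun u => exists H : F u, V (exist _ u H)).
      assert (Ho := inv_cont lt Hwo d Hmet F phi psi0 (g_cpt _ _ _ _ _ _ _ _ _ G) Hct Hinj
                    (fun p => proj1 (Hpsi p)) (fun p => proj2 (Hpsi p)) V').
      assert (Ho' : order_open (opi_lt lt) (fun p => V' (psi0 p))).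
      { apply Ho. intros u Hu [Hu' HVu]. destruct (HV _ HVu) as [e [He He']].
        exists e. split; auto. intros v Hv Hd. exists Hv. apply (He' (exist _ v Hv)). simpl. auto. }
      intros p Hp. destruct (Ho' p) as [lo [hi [H1 [H2 H3]]]].
      { exists (proj1 (Hpsi p)). exact Hp. }
      exists lo, hi. split; auto. split; auto. intros z Hz1 Hz2. destruct (H3 z Hz1 Hz2) as [Hz Vz].
      replace (proj1 (Hpsi z)) with Hz by apply proof_irrelevance. exact Vz.
  - exact (g_h _ _ _ _ _ _ _ _ _ G).
  - intro y. split.
    + intro Hy. exact (proj2 (proj2 (proj2 (Hiter (bigh h M) (fun u H => H) None))) y Hy).
    + intros ->. apply (proj1 (proj2 (Hiter (bigh h M) (fun u H => H) None))). right; auto.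
  - intro y. rewrite (iterate_ext lt (acc d) (PhiH d (fun _ => True)) F).
    + split.
      * intro Hy. exact (proj2 (proj2 (proj2 (Hiter (fun _ => True) (fun u H => I) None))) y Hy).
      * intros ->. apply (proj1 (proj2 (Hiter (fun _ => True) (fun u H => I) None))). right; auto.
    + intros S z. unfold PhiH. apply acc_ext. intro w. tauto.
Qed.
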